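(* Let $(\pi,\sigma)$ be a commutant pair of projective unitary representations of a countable group $G$ on a Hilbert space $H$ such that the set $\mathcal{B}_\pi$ of Bessel vectors of $\pi$ is dense in $H$. Let $\xi_i,\eta_i\in H$ ($i=1,\dots,k$) be Bessel vectors for $\pi$, and $\vec\xi=(\xi_1,\dots,\xi_k)$, $\vec\eta=(\eta_1,\dots,\eta_k)$. If $[\Theta_{\vec\xi,\pi}(H)]=[\Theta_{\vec\eta,\pi}(H)]$, then $[\sigma^{(k)}(G)\vec\xi\,]=[\sigma^{(k)}(G)\vec\eta\,]$.
   Context: A projective unitary representation of $G$ on $H$ is a map $g\mapsto\pi(g)$ into unitaries with $\pi(g)\pi(h)=\mu(g,h)\pi(gh)$, $\mu:G\times G\to\mathbb{T}$. $\xi$ is a Bessel vector for $\pi$ if $\{\pi(g)\xi\}_{g\in G}$ is a Bessel sequence. $(\pi,\sigma)$ is a commutant pair if $\pi(G)'=\sigma(G)''$. For $\xi\in H$, $\Theta_{\xi,\pi}(x)=\sum_{g}\langle x,\pi(g)\xi\rangle\chi_g\in\ell^2(G)$, and $\Theta_{\vec\xi,\pi}(x)=\Theta_{\xi_1,\pi}(x)\oplus\cdots\oplus\Theta_{\xi_k,\pi}(x)\in\ell^2(G)^{(k)}$. $\sigma^{(k)}(g)=\sigma(g)\oplus\cdots\oplus\sigma(g)$ acts on $H^{(k)}$, the direct sum of $k$ copies of $H$. $[K]$ denotes the closed linear span of $K$. *)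

(* Defs.v *)
From HB Require Import structures.
From mathcomp Require Import all_boot all_order all_algebra.
From mathcomp Require Import reals.
From mathcomp Require Import complex.
Set Implicit Arguments. Unset Strict Implicit. Unset Printing Implicit Defensive.
Import Order.TTheory GRing.Theory Num.Theory.
Local Open Scope ring_scope.

Section HilbertDefs.
Variable R : realType.
Local Notation C := R[i].
Variable V : lmodType C.
(* inner product, linear in the FIRST argument, conjugate-linear in the second *)
Variable ip : V -> V -> C.

Definition nsq (x : V) : R := complex.Re (ip x x).

Definition is_hilbert_space : Prop :=
  [/\ (forall (a : C) (x y z : V), ip (a *: x + y) z = a * ip x z + ip y z),
      (forall x y : V, ip x y = (ip y x)^*),
      (forall x : V, 0 <= ip x x),
      (forall x : V, ip x x = 0 -> x = 0) &
      (forall u : nat -> V,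
         (forall e : R, 0 < e -> exists N : nat, forall m n : nat,
             (N <= m)%N -> (N <= n)%N -> nsq (u m - u n) < e) ->
         exists l : V, forall e : R, 0 < e -> exists N : nat, forall n : nat,
             (N <= n)%N -> nsq (u n - l) < e)].

Definition is_linear_op (T : V -> V) : Prop :=
  forall (a : C) (x y : V), T (a *: x + y) = a *: T x + T y.

Definition bounded_op (T : V -> V) : Prop :=
  is_linear_op T /\ exists M : R, forall x : V, nsq (T x) <= M * nsq x.

Definition unitary (U : V -> V) : Prop :=
  [/\ is_linear_op U, (forall x y : V, ip (U x) (U y) = ip x y) &
      (forall y : V, exists x : V, U x = y)].

Definition commutant (S : (V -> V) -> Prop) (T : V -> V) : Prop :=
  bounded_op T /\ forall A : V -> V, S A -> forall x : V, T (A x) = A (T x).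

Variable G : groupType.

Definition range_op (pi : G -> V -> V) (A : V -> V) : Prop := exists g : G, A = pi g.

Definition proj_unitary_rep (pi : G -> V -> V) : Prop :=
  (forall g : G, unitary (pi g)) /\
  exists mu : G -> G -> C, (forall g h : G, `|mu g h| = 1) /\
    forall (g h : G) (x : V), pi g (pi h x) = mu g h *: pi (g * h)%g x.

Definition commutant_pair (pi sigma : G -> V -> V) : Prop :=
  forall T : V -> V,
    commutant (range_op pi) T <-> commutant (commutant (range_op sigma)) T.

(* xi is a Bessel vector: {pi(g) xi}_g is a Bessel sequence, i.e.
   sum_g |<x, pi(g) xi>|^2 <= B ||x||^2 (sum over all finite subsets of G) *)
Definition bessel_vec (pi : G -> V -> V) (xi : V) : Prop :=
  exists B : R, forall (x : V) (s : seq G), uniq s ->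
    \sum_(g <- s) Normc.normc (ip x (pi g xi)) ^+ 2 <= B * nsq x.

Definition bessel_dense (pi : G -> V -> V) : Prop :=
  forall (x : V) (e : R), 0 < e -> exists xi : V, bessel_vec pi xi /\ nsq (x - xi) < e.

(* Theta_{xi,pi}(x) = sum_g <x, pi(g) xi> chi_g, as a function G -> C *)
Definition Theta (pi : G -> V -> V) (xi : V) (x : V) : G -> C :=
  fun g => ip x (pi g xi).

Definition Thetak (k : nat) (pi : G -> V -> V) (xi : 'I_k -> V) (x : V) : 'I_k -> G -> C :=
  fun i => Theta pi (xi i) x.

Definition l2k (k : nat) (y : 'I_k -> G -> C) : Prop :=
  exists B : R, forall s : seq G, uniq s ->
    \sum_(i < k) \sum_(g <- s) Normc.normc (y i g) ^+ 2 <= B.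

Definition l2k_closed_span (k : nat) (S : ('I_k -> G -> C) -> Prop)
    (y : 'I_k -> G -> C) : Prop :=
  l2k y /\
  forall e : R, 0 < e -> exists (n : nat) (c : 'I_n -> C) (f : 'I_n -> 'I_k -> G -> C),
    (forall j, S (f j)) /\
    forall s : seq G, uniq s ->
      \sum_(i < k) \sum_(g <- s) Normc.normc (y i g - \sum_(j < n) c j * f j i g) ^+ 2 <= e.

Definition Hk_closed_span (k : nat) (S : ('I_k -> V) -> Prop) (y : 'I_k -> V) : Prop :=
  forall e : R, 0 < e -> exists (n : nat) (c : 'I_n -> C) (f : 'I_n -> 'I_k -> V),
    (forall j, S (f j)) /\
    \sum_(i < k) nsq (y i - \sum_(j < n) c j *: f j i) <= e.

Definition Theta_range (k : nat) (pi : G -> V -> V) (xi : 'I_k -> V)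
    (f : 'I_k -> G -> C) : Prop := exists x : V, f = Thetak pi xi x.

Definition orbitk (k : nat) (sigma : G -> V -> V) (xi : 'I_k -> V) (v : 'I_k -> V) : Prop :=
  exists g : G, v = (fun i => sigma g (xi i)).

End HilbertDefs.

(* Main.v *)
Require Import Defs.
From HB Require Import structures.
From mathcomp Require Import all_boot all_order all_algebra.
From mathcomp Require Import reals complex.
From mathcomp Require Import ring lra.
From Stdlib Require Import IndefiniteDescription FunctionalExtensionality ClassicalEpsilon.
Import Order.TTheory GRing.Theory Num.Theory.
Local Open Scope ring_scope.
Set Implicit Arguments. Unset Strict Implicit. Unset Printing Implicit Defensive.


Section Cx.
Variable R : realType.
Local Notation C := R[i].
Local Notation nc := (@Normc.normc R).
Local Notation "x %:C" := (real_complex R x) (at level 1, format "x %:C").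
Implicit Types z w : C.

Lemma ncC z : (nc z)%:C = `|z|.
Proof. by case: z => a b; rewrite normc_def. Qed.

Lemma nc_ge0 z : 0 <= nc z.
Proof. by case: z => a b; rewrite /Normc.normc sqrtr_ge0. Qed.

Lemma ncM z w : nc (z * w) = nc z * nc w.
Proof. exact: Normc.normcM. Qed.

Lemma ncD z w : nc (z + w) <= nc z + nc w.
Proof. exact: le_normcD. Qed.

Lemma ncN z : nc (- z) = nc z.
Proof. exact: normcN. Qed.

Lemma ncJ z : nc (z^*) = nc z.
Proof. by apply: complexI; rewrite !ncC norm_conjC. Qed.

Lemma nc_sq z : ((nc z) ^+ 2)%:C = z * z^*.
Proof. by rewrite rmorphXn /= ncC normCK. Qed.

Lemma nc_sq' z : (nc z) ^+ 2 = complex.Re (z * z^*).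
Proof. by rewrite -nc_sq. Qed.

Lemma nc_real (r : R) : nc (r%:C) = `|r|.
Proof. apply: complexI; rewrite ncC. by rewrite normc_def /= expr0n addr0 sqrtr_sqr. Qed.

Lemma Re_le_nc z : complex.Re z <= nc z.
Proof.
case: z => a b /=; apply: le_trans (ler_norm a) _.
rewrite -sqrtr_sqr; apply: ler_wsqrtr; rewrite lerDl sqr_ge0 //.
Qed.

Lemma nc0 : nc 0 = 0. Proof. exact: Normc.normc0. Qed.
Lemma nc1 : nc 1 = 1. Proof. exact: Normc.normc1. Qed.
Lemma nc_eq0 z : nc z = 0 -> z = 0. Proof. exact: Normc.eq0_normc. Qed.

Lemma ReD z w : complex.Re (z + w) = complex.Re z + complex.Re w.
Proof. by case: z; case: w. Qed.
Lemma ReN z : complex.Re (- z) = - complex.Re z.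
Proof. by case: z. Qed.
Lemma ReB z w : complex.Re (z - w) = complex.Re z - complex.Re w.
Proof. by rewrite ReD ReN. Qed.
Lemma ReRM (r : R) z : complex.Re (r%:C * z) = r * complex.Re z.
Proof. by case: z => a b /=; rewrite mul0r subr0. Qed.
Lemma Re_sum (I : Type) (s : seq I) (P : pred I) (F : I -> C) :
  complex.Re (\sum_(i <- s | P i) F i) = \sum_(i <- s | P i) complex.Re (F i).
Proof.
elim: s => [|x s IH]; first by rewrite !big_nil.
by rewrite !big_cons; case: (P x); rewrite ?ReD IH.
Qed.
Lemma ReC (r : R) : complex.Re (r%:C) = r. Proof. by []. Qed.
Lemma ReJ z : complex.Re (z^*) = complex.Re z.
Proof. by apply: complexI; rewrite !complexRe Re_conj. Qed.

Lemma ge0_real z : 0 <= z -> z = (complex.Re z)%:C.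
Proof. case: z => a b; rewrite lecE /= => /andP [/eqP -> _] //. Qed.

End Cx.


Section IP.
Variable R : realType.
Local Notation C := R[i].
Local Notation nc := (@Normc.normc R).
Local Notation "x %:C" := (real_complex R x) (at level 1, format "x %:C").
Variable W : lmodType C.
Variable ip : W -> W -> C.
Hypothesis hH : is_hilbert_space ip.
Let ipD : forall (a : C) (x y z : W), ip (a *: x + y) z = a * ip x z + ip y z.
Proof. by case: hH. Qed.
Let ipC : forall x y : W, ip x y = (ip y x)^*.
Proof. by case: hH. Qed.
Let ipge0 : forall x : W, 0 <= ip x x.
Proof. by case: hH. Qed.
Let ipdef : forall x : W, ip x x = 0 -> x = 0.
Proof. by case: hH. Qed.
Local Notation nsq := (nsq ip).
Implicit Types x y z : W.

Lemma conjRC (r : R) : (r%:C)^* = r%:C.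
Proof. by apply: conj_Creal; rewrite complex_real. Qed.

Lemma ipDl x y z : ip (x + y) z = ip x z + ip y z.
Proof. by rewrite -[x]scale1r ipD mul1r scale1r. Qed.
Lemma ip0l z : ip 0 z = 0.
Proof. by apply: (@addrI _ (ip 0 z)); rewrite addr0 -ipDl addr0. Qed.
Lemma ipZl a x z : ip (a *: x) z = a * ip x z.
Proof. by rewrite -[a *: x]addr0 ipD ip0l addr0. Qed.
Lemma ipNl x z : ip (- x) z = - ip x z.
Proof. by rewrite -scaleN1r ipZl mulN1r. Qed.
Lemma ipBl x y z : ip (x - y) z = ip x z - ip y z.
Proof. by rewrite ipDl ipNl. Qed.
Lemma ip_suml (I : Type) (s : seq I) (P : pred I) (f : I -> W) z :
  ip (\sum_(i <- s | P i) f i) z = \sum_(i <- s | P i) ip (f i) z.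
Proof.
elim: s => [|a s IH]; first by rewrite !big_nil ip0l.
by rewrite !big_cons; case: (P a); rewrite ?ipDl IH.
Qed.
Lemma ipDr x y z : ip z (x + y) = ip z x + ip z y.
Proof. by rewrite ipC ipDl rmorphD /= -!ipC. Qed.
Lemma ip0r z : ip z 0 = 0.
Proof. by rewrite ipC ip0l conjC0. Qed.
Lemma ipZr a x z : ip z (a *: x) = a^* * ip z x.
Proof. by rewrite ipC ipZl rmorphM /= -ipC. Qed.
Lemma ipNr x z : ip z (- x) = - ip z x.
Proof. by rewrite ipC ipNl rmorphN /= -ipC. Qed.
Lemma ipBr x y z : ip z (x - y) = ip z x - ip z y.
Proof. by rewrite ipDr ipNr. Qed.
Lemma ip_sumr (I : Type) (s : seq I) (P : pred I) (f : I -> W) z :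
  ip z (\sum_(i <- s | P i) f i) = \sum_(i <- s | P i) (ip z (f i)).
Proof.
elim: s => [|a s IH]; first by rewrite !big_nil ip0r.
by rewrite !big_cons; case: (P a); rewrite ?ipDr IH.
Qed.

Lemma ipxx x : ip x x = (nsq x)%:C.
Proof. exact: ge0_real. Qed.
Lemma nsq_ge0 x : 0 <= nsq x.
Proof. by have := ipge0 x; rewrite ipxx lecR. Qed.
Lemma nsq0 : nsq 0 = 0.
Proof. by rewrite /nsq ip0l. Qed.
Lemma nsq_eq0 x : nsq x = 0 -> x = 0.
Proof. by move=> h; apply: ipdef; rewrite ipxx h. Qed.
Lemma nsqZ a x : nsq (a *: x) = nc a ^+ 2 * nsq x.
Proof.
by rewrite /nsq ipZl ipZr mulrA -nc_sq ipxx -rmorphM.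
Qed.
Lemma nsqN x : nsq (- x) = nsq x.
Proof. by rewrite /nsq ipNl ipNr opprK. Qed.
Lemma nsqD x y : nsq (x + y) = nsq x + nsq y + 2 * complex.Re (ip x y).
Proof.
rewrite /nsq ipDl !ipDr !ReD [ip y x]ipC ReJ; ring.
Qed.
Lemma nsqB x y : nsq (x - y) = nsq x + nsq y - 2 * complex.Re (ip x y).
Proof. by rewrite nsqD nsqN ipNr ReN; ring. Qed.

Lemma CS x y : nc (ip x y) ^+ 2 <= nsq x * nsq y.
Proof.
have [n0|nP] := eqVneq (nsq y) 0.
  by rewrite n0 (nsq_eq0 n0) ip0r nc0 expr0n mulr0.
have ny : 0 < nsq y by rewrite lt_def nP nsq_ge0.
set c := ip x y; set n := nsq y.
have h := nsq_ge0 (x - (c * (n^-1)%:C) *: y).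
have ni : 0 <= n^-1 by rewrite invr_ge0 ltW.
rewrite nsqB nsqZ ipZr rmorphM /= conjRC ncM nc_real (ger0_norm ni) in h.
rewrite -/n -/c in h.
have e1 : c^* * (n^-1)%:C * c = ((nc c ^+ 2) * n^-1)%:C.
  by rewrite rmorphM /= nc_sq mulrC mulrA.
rewrite e1 ReC in h.
set u := nc c ^+ 2 in h *.
rewrite -subr_ge0; have nyi : 0 < n^-1 by rewrite invr_gt0.
rewrite -(pmulr_rge0 _ nyi).
have -> : n^-1 * (nsq x * n - u) = nsq x + (nc c * n^-1) ^+ 2 * n - 2 * (u * n^-1).
  rewrite exprMn /u; field; by rewrite lt0r_neq0.
exact: h.
Qed.

Lemma CSt x y (t : R) : 0 < t -> 2 * nc (ip x y) <= t * nsq x + nsq y / t.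
Proof.
move=> t0; have := CS x y; have := nc_ge0 (ip x y); have := nsq_ge0 x; have := nsq_ge0 y.
set c := nc _; move=> hY hX hc h.
set u := nsq y / t. have hu : nsq y = t * u by rewrite /u; field; rewrite lt0r_neq0.
rewrite hu in h; have u0 : 0 <= u by rewrite /u divr_ge0 // ltW.
rewrite -(@ler_pXn2r _ 2) // ?nnegrE; last 2 first.
- by rewrite mulr_ge0.
- by rewrite addr_ge0 // mulr_ge0 // ltW.
have : 0 <= (t * nsq x - u) ^+ 2 by apply: sqr_ge0.
move=> hh.
have -> : (t * nsq x + u) ^+ 2 = (t * nsq x - u) ^+ 2 + 4 * (nsq x * (t * u)) by ring.
have -> : (2 * c) ^+ 2 = 4 * c ^+ 2 by ring.
lra.
Qed.

Lemma Re_ip_le x y : complex.Re (ip x y) <= nc (ip x y).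
Proof. exact: Re_le_nc. Qed.

Lemma nsqD2 x y : nsq (x + y) <= 2 * nsq x + 2 * nsq y.
Proof.
have h := nsq_ge0 (x - y); rewrite nsqB in h; rewrite nsqD; lra.
Qed.

Lemma nsq_sum (I : Type) (s : seq I) (f : I -> W) :
  nsq (\sum_(i <- s) f i) <= 2 ^+ size s * \sum_(i <- s) nsq (f i).
Proof.
elim: s => [|a s IH]; first by rewrite !big_nil nsq0 mulr0.
rewrite !big_cons /=; apply: le_trans (nsqD2 _ _) _.
have h1 : 0 <= nsq (f a) := nsq_ge0 _.
have h2 : 0 <= \sum_(i <- s) nsq (f i) by apply: sumr_ge0 => i _; apply: nsq_ge0.
have h3 : 1 <= 2 ^+ size s :> R by apply: exprn_ege1; rewrite ler1n.
rewrite exprS; nra.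
Qed.

End IP.


Lemma le0_small (R : realType) (x : R) : (forall e, 0 < e -> x <= e) -> x <= 0.
Proof. by move=> h; apply/ler_addgt0Pr => e e0; rewrite add0r h. Qed.

Lemma sup_ex (R : realType) (E : R -> Prop) (x0 M : R) : E x0 -> (forall x, E x -> x <= M) ->
  exists s, (forall x, E x -> x <= s) /\ (forall e, 0 < e -> exists x, E x /\ s - e < x).
Proof.
move=> h0 hM.
have hs : classical_sets.has_sup E.
  by split; [exists x0 | exists M => x /hM].
exists (reals.sup E); split; first by move=> x Ex; apply: reals.sup_upper_bound.
by move=> e e0; have [x Ex lt] := reals.sup_adherent e0 hs; exists x.
Qed.

Section Span.
Variable R : realType.
Local Notation C := R[i].
Local Notation nc := (@Normc.normc R).
Local Notation "x %:C" := (real_complex R x) (at level 1, format "x %:C").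
Variable W : lmodType C.
Variable ip : W -> W -> C.
Hypothesis hH : is_hilbert_space ip.
Let ipD : forall (a : C) (x y z : W), ip (a *: x + y) z = a * ip x z + ip y z.
Proof. by case: hH. Qed.
Let ipC : forall x y : W, ip x y = (ip y x)^*.
Proof. by case: hH. Qed.
Let ipge0 : forall x : W, 0 <= ip x x.
Proof. by case: hH. Qed.
Let ipdef : forall x : W, ip x x = 0 -> x = 0.
Proof. by case: hH. Qed.
Local Notation nsq := (nsq ip).
Implicit Types x y z : W.
Definition Nm x : R := Num.sqrt (nsq x).

Lemma Nm_ge0 x : 0 <= Nm x. Proof. exact: sqrtr_ge0. Qed.
Lemma Nm_sq x : Nm x ^+ 2 = nsq x.
Proof. by rewrite /Nm sqr_sqrtr // (nsq_ge0 hH). Qed.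

Lemma ler_sq (a b : R) : 0 <= a -> 0 <= b -> a ^+ 2 <= b ^+ 2 -> a <= b.
Proof. by move=> a0 b0; rewrite (@ler_pXn2r _ 2). Qed.

Lemma ncip_le x y : nc (ip x y) <= Nm x * Nm y.
Proof.
apply: ler_sq; rewrite ?nc_ge0 ?mulr_ge0 ?Nm_ge0 //.
by rewrite exprMn !Nm_sq CS.
Qed.

Lemma Nm_tri x y : Nm (x + y) <= Nm x + Nm y.
Proof.
apply: ler_sq; rewrite ?addr_ge0 ?Nm_ge0 //.
rewrite Nm_sq (nsqD hH) sqrrD !Nm_sq.
have := le_trans (Re_le_nc (ip x y)) (ncip_le x y); lra.
Qed.

Lemma Nm_opp x : Nm (- x) = Nm x.
Proof. by rewrite /Nm (nsqN hH). Qed.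
Lemma Nm_sym x y : Nm (x - y) = Nm (y - x).
Proof. by rewrite -Nm_opp opprB. Qed.
Lemma Nm_tri3 x y z : Nm (x - z) <= Nm (x - y) + Nm (y - z).
Proof. by have := Nm_tri (x - y) (y - z); rewrite addrA subrK. Qed.
Lemma NmZ a x : Nm (a *: x) = nc a * Nm x.
Proof. by rewrite /Nm (nsqZ hH) sqrtrM ?sqr_ge0 // sqrtr_sqr ger0_norm ?nc_ge0. Qed.
Lemma Nm0 : Nm 0 = 0. Proof. by rewrite /Nm (nsq0 hH) sqrtr0. Qed.
Lemma Nm_le_of (x : W) (d : R) : 0 <= d -> nsq x <= d ^+ 2 -> Nm x <= d.
Proof. by move=> d0 h; apply: ler_sq; rewrite ?Nm_ge0 // Nm_sq. Qed.
Lemma nsq_le_of (x : W) (d : R) : Nm x <= d -> nsq x <= d ^+ 2.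
Proof.
move=> h; rewrite -Nm_sq; rewrite ler_pXn2r ?nnegrE ?Nm_ge0 //.
exact: le_trans (Nm_ge0 x) h.
Qed.
Lemma Nm_eq0 x : Nm x = 0 -> x = 0.
Proof. by move=> h; apply: (nsq_eq0 hH); rewrite -Nm_sq h expr0n. Qed.

Definition spanP (S : W -> Prop) (u : W) :=
  exists s : seq (C * W), (forall p, p \in s -> S p.2) /\ u = \sum_(p <- s) p.1 *: p.2.

Definition cspan (S : W -> Prop) (y : W) :=
  forall e : R, 0 < e -> exists u, spanP S u /\ nsq (y - u) <= e.

Variable S : W -> Prop.

Lemma spanP0 : spanP S 0.
Proof. by exists [::]; rewrite big_nil. Qed.
Lemma spanP_in v : S v -> spanP S v.
Proof.
move=> Sv; exists [:: (1, v)]; split; last by rewrite big_seq1 scale1r.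
by move=> p; rewrite inE => /eqP ->; exact: Sv.
Qed.
Lemma spanPD u v : spanP S u -> spanP S v -> spanP S (u + v).
Proof.
move=> [s [hs ->]] [t [ht ->]]; exists (s ++ t); split; last by rewrite big_cat.
by move=> p; rewrite mem_cat => /orP [/hs|/ht].
Qed.
Lemma spanPZ a u : spanP S u -> spanP S (a *: u).
Proof.
move=> [s [hs ->]]; exists [seq (a * p.1, p.2) | p <- s]; split.
  by move=> p /mapP [q qs ->]; exact: (hs q qs).
by rewrite scaler_sumr big_map; apply: eq_bigr => p _; rewrite scalerA.
Qed.
Lemma spanP_sum (I : Type) (r : seq I) (F : I -> W) :
  (forall i, spanP S (F i)) -> spanP S (\sum_(i <- r) F i).
Proof.
move=> h; elim: r => [|i r IH]; first by rewrite big_nil; exact: spanP0.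
by rewrite big_cons; apply: spanPD.
Qed.

Lemma cspanP y : cspan S y <-> forall d : R, 0 < d -> exists u, spanP S u /\ Nm (y - u) <= d.
Proof.
split=> h d d0.
  have [u [su hu]] := h (d ^+ 2) (exprn_gt0 2 d0).
  by exists u; split => //; apply: Nm_le_of => //; apply: ltW.
have sd : 0 < Num.sqrt d by rewrite sqrtr_gt0.
have [u [su hu]] := h (Num.sqrt d) sd.
exists u; split => //; have := nsq_le_of hu; rewrite sqr_sqrtr // ltW //.
Qed.

Lemma cspan_span u : spanP S u -> cspan S u.
Proof. by move=> su e e0; exists u; split => //; rewrite subrr (nsq0 hH) ltW. Qed.

Lemma cspanD y1 y2 : cspan S y1 -> cspan S y2 -> cspan S (y1 + y2).
Proof.
move=> /cspanP h1 /cspanP h2; apply/cspanP => d d0.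
have d2 : 0 < d / 2 by rewrite divr_gt0.
have [u1 [s1 n1]] := h1 _ d2; have [u2 [s2 n2]] := h2 _ d2.
exists (u1 + u2); split; first exact: spanPD.
have -> : y1 + y2 - (u1 + u2) = (y1 - u1) + (y2 - u2) by rewrite opprD addrACA.
apply: le_trans (Nm_tri _ _) _; lra.
Qed.

Lemma cspanZ a y : cspan S y -> cspan S (a *: y).
Proof.
move=> /cspanP h; apply/cspanP => d d0.
have hp : 0 < nc a + 1 by have := nc_ge0 a; lra.
have [u [su nu]] := h (d / (nc a + 1)) (divr_gt0 d0 hp).
exists (a *: u); split; first exact: spanPZ.
rewrite -scalerBr NmZ; apply: le_trans (ler_wpM2l (nc_ge0 a) nu) _.
rewrite mulrA ler_pdivrMr //; have := nc_ge0 a; nra.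
Qed.

Lemma cspan0 : cspan S 0.
Proof. exact/cspan_span/spanP0. Qed.

Lemma cspan_sum (I : Type) (r : seq I) (F : I -> W) :
  (forall i, cspan S (F i)) -> cspan S (\sum_(i <- r) F i).
Proof.
move=> h; elim: r => [|i r IH]; first by rewrite big_nil; exact: cspan0.
by rewrite big_cons; apply: cspanD.
Qed.

Lemma cspanB y1 y2 : cspan S y1 -> cspan S y2 -> cspan S (y1 - y2).
Proof. by move=> h1 h2; apply: cspanD => //; rewrite -scaleN1r; apply: cspanZ. Qed.

Lemma orth_span z : (forall v, S v -> ip z v = 0) -> forall u, spanP S u -> ip z u = 0.
Proof.
move=> h u [s [hs ->]]; rewrite (ip_sumr hH); apply: big1_seq => p /hs Sp.
by rewrite (ipZr hH) h // mulr0.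
Qed.

Lemma orth_cspan z : (forall v, S v -> ip z v = 0) -> forall y, cspan S y -> ip z y = 0.
Proof.
move=> h y /cspanP hy; apply: nc_eq0; apply/eqP; rewrite eq_le nc_ge0 andbT.
apply: le0_small => e e0.
have hp : 0 < Nm z + 1 by have := Nm_ge0 z; lra.
have [u [su nu]] := hy (e / (Nm z + 1)) (divr_gt0 e0 hp).
have -> : ip z y = ip z (y - u) by rewrite (ipBr hH) (orth_span h su) subr0.
apply: le_trans (ncip_le _ _) _; apply: le_trans (ler_wpM2l (Nm_ge0 z) nu) _.
rewrite mulrA ler_pdivrMr //; have := Nm_ge0 z; nra.
Qed.

End Span.

Lemma cspan_trans (R : realType) (W : lmodType R[i]) (ip : W -> W -> R[i])
  (hH : is_hilbert_space ip) (S S' : W -> Prop) :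
  (forall v, S v -> cspan ip S' v) -> forall y, cspan ip S y -> cspan ip S' y.
Proof.
move=> hS y /(cspanP hH) hy; apply/(cspanP hH) => d d0.
have d2 : 0 < d / 2 by rewrite divr_gt0.
have [u [[s [hs ->]] nu]] := hy _ d2.
have : cspan ip S' (\sum_(p <- s) p.1 *: p.2).
  clear nu; elim: s hs => [|p s IH] hs; first by rewrite big_nil; exact: (cspan0 hH).
  rewrite big_cons; apply: (cspanD hH).
    by apply: (cspanZ hH); apply: hS; apply: hs; rewrite mem_head.
  by apply: IH => q qs; apply: hs; rewrite inE qs orbT.
move/(cspanP hH) => /(_ _ d2) [u' [su' nu']].
exists u'; split => //; apply: le_trans (Nm_tri3 hH _ (\sum_(p <- s) p.1 *: p.2) _) _.
lra.
Qed.


Section Proj.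
Variable R : realType.
Local Notation C := R[i].
Local Notation nc := (@Normc.normc R).
Local Notation "x %:C" := (real_complex R x) (at level 1, format "x %:C").
Variable W : lmodType C.
Variable ip : W -> W -> C.
Hypothesis hH : is_hilbert_space ip.
Let ipD : forall (a : C) (x y z : W), ip (a *: x + y) z = a * ip x z + ip y z.
Proof. by case: hH. Qed.
Let ipC : forall x y : W, ip x y = (ip y x)^*.
Proof. by case: hH. Qed.
Let ipcompl : forall u : nat -> W,
         (forall e : R, 0 < e -> exists N : nat, forall m n : nat,
             (N <= m)%N -> (N <= n)%N -> nsq ip (u m - u n) < e) ->
         exists l : W, forall e : R, 0 < e -> exists N : nat, forall n : nat,
             (N <= n)%N -> nsq ip (u n - l) < e.
Proof. by case: hH. Qed.
Local Notation nsq := (nsq ip).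
Local Notation Nm := (Nm ip).
Local Notation cspan := (cspan ip).
Local Notation spanP := (spanP (W:=W)).
Implicit Types x y z : W.

Lemma nc_nat (n : nat) : nc (n%:R) = n%:R.
Proof. by rewrite -(rmorph_nat (real_complex R)) nc_real normr_nat. Qed.

Lemma ortho_of_min w v : (forall l : C, nsq w <= nsq (w - l *: v)) -> ip w v = 0.
Proof.
move=> h; set a := ip w v.
set t : R := (nsq v + 1)^-1.
have nv := nsq_ge0 hH v.
have t0 : 0 < t by rewrite invr_gt0; lra.
have := h (t%:C * a); rewrite (nsqB hH) (nsqZ hH) (ipZr hH) rmorphM /= conjRC.
rewrite ncM nc_real (gtr0_norm t0).
have -> : t%:C * a^* * ip w v = (t * nc a ^+ 2)%:C by rewrite rmorphM /= nc_sq -/a; ring.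
rewrite ReC => hle.
have hx : 2 * (t * nc a ^+ 2) <= t ^+ 2 * nc a ^+ 2 * nsq v.
  by rewrite exprMn in hle; lra.
have htv : t * nsq v <= 1.
  by rewrite /t mulrC ler_pdivrMr; lra.
have ha : nc a ^+ 2 <= 0.
  have hna := sqr_ge0 (nc a).
  have : t * (2 * nc a ^+ 2) <= t * (nc a ^+ 2) by nra.
  by rewrite ler_pM2l //; lra.
have : nc a ^+ 2 = 0 by apply/eqP; rewrite eq_le ha sqr_ge0.
by move/eqP; rewrite sqrf_eq0 => /eqP /nc_eq0.
Qed.

Lemma arch_inv (e : R) : 0 < e -> exists N : nat, (N.+1%:R)^-1 < e.
Proof.
move=> e0; have ie : 0 < e^-1 by rewrite invr_gt0.
have := archi_boundP (ltW ie).
set N := Num.Def.archi_bound _ => hN.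
exists N; rewrite invf_plt ?posrE ?ltr0Sn //.
by apply: lt_le_trans hN _; rewrite ler_nat.
Qed.

Lemma projection (S : W -> Prop) z :
  exists p, cspan S p /\ forall v, S v -> ip (z - p) v = 0.
Proof.
pose E r := exists u, spanP S u /\ r = - Nm (z - u).
have E0 : E (- Nm z) by exists 0; split; [exact: spanP0 | rewrite subr0].
have EM : forall r, E r -> r <= 0.
  by move=> r [u [_ ->]]; rewrite oppr_le0 Nm_ge0.
have [s [sub sad]] := sup_ex E0 EM.
set D := - s.
have F1 : forall u, spanP S u -> D <= Nm (z - u).
  by move=> u su; rewrite /D lerNl; apply: sub; exists u.
have F2 : forall e, 0 < e -> exists u, spanP S u /\ Nm (z - u) < D + e.
  move=> e e0; have [r [[u [su ->]] lt]] := sad e e0.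
  by exists u; split => //; rewrite /D; lra.
have D0 : 0 <= D.
  apply/ler_addgt0Pr => e e0.
  have [u [_ hu]] := F2 e e0; have := Nm_ge0 ip (z - u); lra.
pose e (n : nat) : R := (n.+1%:R)^-1.
have e0 n : 0 < e n by rewrite /e invr_gt0 ltr0Sn.
have e1 n : e n <= 1 by rewrite /e invf_le1 ?ltr0Sn // ler1n.
have emon m N : (N <= m)%N -> e m <= e N.
  by move=> hm; rewrite /e lef_pV2 ?posrE ?ltr0Sn // ler_nat ltnS.
have hu : forall n, exists u, spanP S u /\ Nm (z - u) < D + e n := fun n => F2 (e n) (e0 n).
pose u n := proj1_sig (constructive_indefinite_description _ (hu n)).
have hu1 n : spanP S (u n) /\ Nm (z - u n) < D + e n.
  exact: (proj2_sig (constructive_indefinite_description _ (hu n))).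
have cb : forall m n, nsq (u n - u m) <= (4 * D + 2) * (e m + e n).
  move=> m n.
  have [sm hm] := hu1 m; have [sn hn] := hu1 n.
  set a := z - u m; set b := z - u n.
  pose mid := (2^-1 : C) *: (u m + u n).
  have smid : spanP S mid by apply: spanPZ; apply: spanPD.
  have pl : nsq (a - b) + nsq (a + b) = 2 * nsq a + 2 * nsq b.
    by rewrite (nsqB hH) (nsqD hH); ring.
  have eab : a - b = u n - u m by rewrite /a /b opprB addrC addrA subrK.
  have two0 : (2 : C) != 0 by rewrite pnatr_eq0.
  have eab2 : a + b = 2 *: (z - mid).
    rewrite scalerBr scalerA mulfV // scale1r /a /b.
    by rewrite -[2 : C]/(1 + 1) scalerDl scale1r opprD addrACA.
  rewrite eab eab2 (nsqZ hH) nc_nat in pl.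
  have hmid := F1 _ smid.
  have h4 : D ^+ 2 <= nsq (z - mid).
    by rewrite -(Nm_sq hH) ler_pXn2r ?nnegrE ?Nm_ge0.
  have ha : nsq a <= (D + e m) ^+ 2.
    by rewrite -(Nm_sq hH); have := Nm_ge0 ip a; have := e0 m; nra.
  have hb : nsq b <= (D + e n) ^+ 2.
    by rewrite -(Nm_sq hH); have := Nm_ge0 ip b; have := e0 n; nra.
  have := e0 m; have := e0 n; have := e1 m; have := e1 n.
  move=> ????; nra.
have cauchy : forall eps : R, 0 < eps -> exists N : nat, forall m n : nat,
    (N <= m)%N -> (N <= n)%N -> nsq (u m - u n) < eps.
  move=> eps eps0.
  have k0 : 0 < 2 * (4 * D + 2) by lra.
  have [N hN] := arch_inv (divr_gt0 eps0 k0).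
  exists N => m n hm hn; apply: le_lt_trans (cb n m) _.
  have := emon _ _ hm; have := emon _ _ hn; have := e0 m; have := e0 n.
  rewrite -/(e N) in hN.
  rewrite ltr_pdivlMr // in hN; move=> *; nra.
have [p hp] := ipcompl cauchy.
exists p.
have pS : cspan S p.
  move=> eps eps0; have [N hN] := hp eps eps0; exists (u N); split; first by case: (hu1 N).
  by rewrite -(nsqN hH) opprB; apply: ltW; apply: hN.
split => //.
have pmin : Nm (z - p) <= D.
  apply/ler_addgt0Pr => d d0.
  have d2 : 0 < d / 2 by rewrite divr_gt0.
  have [N1 hN1] := hp _ (exprn_gt0 2 d2).
  have [N2 hN2] := arch_inv d2.
  set n := maxn N1 N2.
  have h1 : Nm (u n - p) <= d / 2.
    by apply: Nm_le_of => //; [apply: ltW | apply: ltW; apply: hN1; rewrite leq_maxl].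
  have h2 : e n <= e N2 by apply: emon; rewrite leq_maxr.
  have [_ h3] := hu1 n.
  have := Nm_tri3 hH z (u n) p; rewrite -/(e N2) in hN2; lra.
have qmin : forall q, cspan S q -> D <= Nm (z - q).
  move=> q /(cspanP hH) hq; apply/ler_addgt0Pr => d d0.
  have [w [sw hw]] := hq d d0.
  have := F1 _ sw; have := Nm_tri3 hH z q w; lra.
move=> v Sv; apply: ortho_of_min => l.
have hq : cspan S (p + l *: v).
  by apply: (cspanD hH) => //; apply: (cspanZ hH); apply: (cspan_span hH); apply: spanP_in.
have := qmin _ hq; rewrite opprD addrA => hq2.
rewrite -!(Nm_sq hH) ler_pXn2r ?nnegrE ?Nm_ge0 //; lra.
Qed.
End Proj.


Section Hk.
Variable R : realType.
Local Notation C := R[i].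
Local Notation nc := (@Normc.normc R).
Local Notation "x %:C" := (real_complex R x) (at level 1, format "x %:C").
Variable V : lmodType C.
Variable ip : V -> V -> C.
Hypothesis hH : is_hilbert_space ip.
Let ipD : forall (a : C) (x y z : V), ip (a *: x + y) z = a * ip x z + ip y z.
Proof. by case: hH. Qed.
Let ipC : forall x y : V, ip x y = (ip y x)^*.
Proof. by case: hH. Qed.
Let ipge0 : forall x : V, 0 <= ip x x.
Proof. by case: hH. Qed.
Let ipdef : forall x : V, ip x x = 0 -> x = 0.
Proof. by case: hH. Qed.
Let ipcompl : forall u : nat -> V,
         (forall e : R, 0 < e -> exists N : nat, forall m n : nat,
             (N <= m)%N -> (N <= n)%N -> nsq ip (u m - u n) < e) ->
         exists l : V, forall e : R, 0 < e -> exists N : nat, forall n : nat,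
             (N <= n)%N -> nsq ip (u n - l) < e.
Proof. by case: hH. Qed.
Variable k : nat.
Local Notation Wk := {ffun 'I_k -> V}.

Definition ipk (x y : Wk) : C := \sum_i ip (x i) (y i).

Lemma nsqk (x : Wk) : nsq ipk x = \sum_i nsq ip (x i).
Proof. by rewrite /nsq /ipk Re_sum. Qed.

Lemma nsqk_ge (x : Wk) i : nsq ip (x i) <= nsq ipk x.
Proof.
rewrite nsqk (bigD1 i) //= lerDl; apply: sumr_ge0 => j _. exact: (@nsq_ge0 R V ip hH (x j)).
Qed.

Lemma ipk_hilbert : is_hilbert_space ipk.
Proof.
split.
- move=> a x y z; rewrite /ipk mulr_sumr -big_split; apply: eq_bigr => i _.
  by rewrite !ffunE ipD.
- by move=> x y; rewrite /ipk rmorph_sum; apply: eq_bigr => i _; rewrite ipC.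
- by move=> x; apply: sumr_ge0 => i _; apply: ipge0.
- move=> x hx; apply/ffunP => i; rewrite ffunE; apply: ipdef.
  by apply: (psumr_eq0P (fun j _ => ipge0 (x j)) hx).
- move=> u hu.
  have hc : forall i : 'I_k, exists l : V, forall e : R, 0 < e -> exists N : nat,
      forall n : nat, (N <= n)%N -> nsq ip (u n i - l) < e.
    move=> i; apply: ipcompl => e e0; have [N hN] := hu e e0; exists N => m n hm hn.
    apply: le_lt_trans (hN m n hm hn).
    have -> : u m i - u n i = (u m - u n) i by rewrite !ffunE.
    exact: nsqk_ge.
  pose l i := proj1_sig (constructive_indefinite_description _ (hc i)).
  have hl i := proj2_sig (constructive_indefinite_description _ (hc i)).
  exists [ffun i => l i] => e e0.
  have ek : 0 < e / (k.+1)%:R by rewrite divr_gt0 // ltr0Sn.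
  pose Ni i := proj1_sig (constructive_indefinite_description _ (hl i _ ek)).
  have hNi i := proj2_sig (constructive_indefinite_description _ (hl i _ ek)).
  exists (\max_i Ni i) => n hn.
  rewrite nsqk.
  apply: (@le_lt_trans _ _ (\sum_(i < k) e / (k.+1)%:R)).
    apply: ler_sum => i _; rewrite !ffunE; apply: ltW; apply: hNi.
    by apply: leq_trans hn; apply: leq_bigmax.
  rewrite sumr_const card_ord -[_ *+ k]mulr_natr.
  have hq : e = (e / (k.+1)%:R) * (k.+1)%:R by rewrite divfK // pnatr_eq0.
  by rewrite [X in _ < X]hq ltr_pM2l // ltr_nat.
Qed.

Definition liftS (S : ('I_k -> V) -> Prop) (w : Wk) : Prop := S (fun i => w i).

Lemma Hk_cspan (S : ('I_k -> V) -> Prop) (y : 'I_k -> V) :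
  Hk_closed_span ip S y <-> cspan ipk (liftS S) [ffun i => y i].
Proof.
split.
- move=> h e e0; have [n [c [f [hf hs]]]] := h e e0.
  exists (\sum_(j < n) c j *: [ffun i => f j i]); split.
    apply: spanP_sum => j; apply: spanPZ; apply: spanP_in.
    by rewrite /liftS; have -> : (fun i => [ffun i0 => f j i0] i) = f j
      by apply: functional_extensionality => i; rewrite ffunE. 
  rewrite nsqk; apply: le_trans hs; rewrite le_eqVlt; apply/orP; left; apply/eqP.
  apply: eq_bigr => i _; congr (nsq ip _); rewrite !ffunE sum_ffunE; congr (_ - _).
  by apply: eq_bigr => j _; rewrite !ffunE.
- move=> h e e0; have [u [[s [hs ->]] hu]] := h e e0.
  pose x0 : C * Wk := (0, 0).
  exists (size s), (fun j => (nth x0 s j).1), (fun j i => (nth x0 s j).2 i); split.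
    by move=> j; apply: (hs (nth x0 s j)); apply: mem_nth.
  rewrite nsqk in hu; apply: le_trans hu; rewrite le_eqVlt; apply/orP; left; apply/eqP.
  apply: eq_bigr => i _; congr (nsq ip _); rewrite !ffunE sum_ffunE; congr (_ - _).
  rewrite (big_nth x0) big_mkord; apply: eq_bigr => j _; by rewrite !ffunE.
Qed.

End Hk.


Lemma amgm (R : realType) (a b t : R) : 0 < t -> 2 * (a * b) <= t * a ^+ 2 + b ^+ 2 / t.
Proof.
move=> t0; have h := sqr_ge0 (t * a - b).
have -> : t * a ^+ 2 + b ^+ 2 / t = (t ^+ 2 * a ^+ 2 + b ^+ 2) / t.
  by field; rewrite lt0r_neq0.
rewrite ler_pdivlMr //; nra.
Qed.

Section Nets.
Variable R : realType.
Local Notation C := R[i].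
Local Notation nc := (@Normc.normc R).
Local Notation "x %:C" := (real_complex R x) (at level 1, format "x %:C").
Variable V : lmodType C.
Variable ip : V -> V -> C.
Hypothesis hH : is_hilbert_space ip.
Let ipD : forall (a : C) (x y z : V), ip (a *: x + y) z = a * ip x z + ip y z.
Proof. by case: hH. Qed.
Let ipC : forall x y : V, ip x y = (ip y x)^*.
Proof. by case: hH. Qed.
Let ipcompl : forall u : nat -> V,
         (forall e : R, 0 < e -> exists N : nat, forall m n : nat,
             (N <= m)%N -> (N <= n)%N -> nsq ip (u m - u n) < e) ->
         exists l : V, forall e : R, 0 < e -> exists N : nat, forall n : nat,
             (N <= n)%N -> nsq ip (u n - l) < e.
Proof. by case: hH. Qed.
Local Notation nsq := (nsq ip).
Local Notation Nm := (Nm ip).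
Variable G : groupType.

Definition Fu (F0 F1 : seq G) := undup (F0 ++ F1).
Lemma Fu_uniq F0 F1 : uniq (Fu F0 F1). Proof. exact: undup_uniq. Qed.
Lemma Fu_l F0 F1 : {subset F0 <= Fu F0 F1}.
Proof. by move=> g gF; rewrite mem_undup mem_cat gF. Qed.
Lemma Fu_r F0 F1 : {subset F1 <= Fu F0 F1}.
Proof. by move=> g gF; rewrite mem_undup mem_cat gF orbT. Qed.

Definition netlim (Phi : seq G -> V) (v : V) :=
  forall e : R, 0 < e -> exists F0, uniq F0 /\
    forall F, uniq F -> {subset F0 <= F} -> nsq (Phi F - v) <= e.

Definition netcauchy (Phi : seq G -> V) :=
  forall e : R, 0 < e -> exists F0, uniq F0 /\
    forall F F', uniq F -> uniq F' -> {subset F0 <= F} -> {subset F0 <= F'} ->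
      nsq (Phi F - Phi F') <= e.

Definition net0 (phi : seq G -> C) :=
  forall e : R, 0 < e -> exists F0, uniq F0 /\
    forall F, uniq F -> {subset F0 <= F} -> nc (phi F) <= e.


Lemma netlim_unique Phi v w : netlim Phi v -> netlim Phi w -> v = w.
Proof.
move=> hv hw; apply/eqP; rewrite -subr_eq0; apply/eqP; apply: (Nm_eq0 hH).
apply/eqP; rewrite eq_le Nm_ge0 andbT; apply: le0_small => d d0.
have d2 : 0 < (d / 2) ^+ 2 by rewrite exprn_gt0 // divr_gt0.
have [F0 [u0 h0]] := hv _ d2; have [F1 [u1 h1]] := hw _ d2.
set F := Fu F0 F1.
have e0 := h0 F (Fu_uniq _ _) (@Fu_l F0 F1); have e1 := h1 F (Fu_uniq _ _) (@Fu_r F0 F1).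
have n0 : Nm (Phi F - v) <= d / 2 by apply: (Nm_le_of hH) => //; rewrite divr_ge0 // ltW.
have n1 : Nm (Phi F - w) <= d / 2 by apply: (Nm_le_of hH) => //; rewrite divr_ge0 // ltW.
have := Nm_tri3 hH v (Phi F) w; rewrite (Nm_sym hH v (Phi F)); lra.
Qed.

Lemma netlim_lin Phi Psi v w (a : C) : netlim Phi v -> netlim Psi w ->
  netlim (fun F => a *: Phi F + Psi F) (a *: v + w).
Proof.
move=> hv hw e e0.
have hp : 0 < nc a + 1 by have := nc_ge0 a; lra.
set d := Num.sqrt e / 2 / (nc a + 1).
have se : 0 < Num.sqrt e by rewrite sqrtr_gt0.
have d0 : 0 < d by rewrite /d !divr_gt0.
have [F0 [u0 h0]] := hv _ (exprn_gt0 2 d0); have [F1 [u1 h1]] := hw _ (exprn_gt0 2 d0).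
exists (Fu F0 F1); split; first exact: Fu_uniq.
move=> F uF sF.
have n0 : Nm (Phi F - v) <= d.
  by apply: (Nm_le_of hH); [apply: ltW | apply: h0 => // g gF; apply/sF/Fu_l].
have n1 : Nm (Psi F - w) <= d.
  by apply: (Nm_le_of hH); [apply: ltW | apply: h1 => // g gF; apply/sF/Fu_r].
have -> : a *: Phi F + Psi F - (a *: v + w) = a *: (Phi F - v) + (Psi F - w).
  by rewrite scalerBr opprD addrACA.
have := Nm_tri hH (a *: (Phi F - v)) (Psi F - w); rewrite (NmZ hH) => ht.
have hna := nc_ge0 a.
have : Nm (a *: (Phi F - v) + (Psi F - w)) <= Num.sqrt e.
  apply: le_trans ht _.
  have : nc a * Nm (Phi F - v) <= nc a * d by apply: ler_wpM2l.
  have hd : (nc a + 1) * d = Num.sqrt e / 2 by rewrite /d; field; rewrite lt0r_neq0.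
  have := Nm_ge0 ip (Phi F - v); nra.
move/(nsq_le_of hH); rewrite sqr_sqrtr // ltW //.
Qed.

Lemma arch_inv' (e : R) : 0 < e -> exists N : nat, (N.+1%:R)^-1 < e.
Proof. exact: arch_inv. Qed.

Lemma net_complete Phi : netcauchy Phi -> exists v, netlim Phi v.
Proof.
move=> hc.
pose e (n : nat) : R := (n.+1%:R)^-1.
have e0 n : 0 < e n by rewrite /e invr_gt0 ltr0Sn.
have emon m N : (N <= m)%N -> e m <= e N.
  by move=> hm; rewrite /e lef_pV2 ?posrE ?ltr0Sn // ler_nat ltnS.
pose F0 n := proj1_sig (constructive_indefinite_description _ (hc (e n) (e0 n))).
have hF0 n := proj2_sig (constructive_indefinite_description _ (hc (e n) (e0 n))).
pose H n := undup (flatten (map F0 (iota 0 n.+1))).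
have Hu n : uniq (H n) by apply: undup_uniq.
have HF m n : (m <= n)%N -> {subset F0 m <= H n}.
  move=> hmn g gF; rewrite mem_undup; apply/flattenP; exists (F0 m) => //.
  by apply: map_f; rewrite mem_iota add0n ltnS hmn.
pose u n := Phi (H n).
have cau : forall eps : R, 0 < eps -> exists N : nat, forall m n : nat,
    (N <= m)%N -> (N <= n)%N -> nsq (u m - u n) < eps.
  move=> eps eps0; have [N hN] := arch_inv eps0; exists N => m n hm hn.
  have [_ h] := hF0 N; apply: le_lt_trans hN.
  by apply: h => //; apply: HF.
have [v hv] := ipcompl cau.
exists v => eps eps0.
have eps4 : 0 < eps / 4 by rewrite divr_gt0.
have [N1 hN1] := arch_inv eps4; have [N2 hN2] := hv _ eps4.
set n := maxn N1 N2.
exists (H n); split => // F uF sF.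
have h1 : nsq (Phi F - u n) <= eps / 4.
  have [_ h] := hF0 N1; apply: le_trans (h F (H n) uF (Hu n) _ _) _.
  - by move=> g gF; apply/sF/(HF N1 n) => //; rewrite leq_maxl.
  - by apply: HF; rewrite leq_maxl.
  - by apply: ltW.
have h2 : nsq (u n - v) <= eps / 4 by apply: ltW; apply: hN2; rewrite leq_maxr.
have := nsqD2 hH (Phi F - u n) (u n - v); rewrite addrA subrK; lra.
Qed.

Lemma net0_add phi psi : net0 phi -> net0 psi -> net0 (fun F => phi F + psi F).
Proof.
move=> h1 h2 e e0; have e2 : 0 < e / 2 by rewrite divr_gt0.
have [F0 [u0 k0]] := h1 _ e2; have [F1 [u1 k1]] := h2 _ e2.
exists (Fu F0 F1); split; first exact: Fu_uniq.
move=> F uF sF; apply: le_trans (ncD _ _) _.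
have := k0 F uF (fun g gF => sF g (@Fu_l F0 F1 g gF)).
have := k1 F uF (fun g gF => sF g (@Fu_r F0 F1 g gF)); lra.
Qed.

Lemma net0_scale (c : C) phi : net0 phi -> net0 (fun F => c * phi F).
Proof.
move=> h e e0; have hp : 0 < nc c + 1 by have := nc_ge0 c; lra.
have [F0 [u0 k0]] := h _ (divr_gt0 e0 hp); exists F0; split => // F uF sF.
rewrite ncM; have := k0 F uF sF; have := nc_ge0 c; have := nc_ge0 (phi F).
rewrite ler_pdivlMr // => ? ? ?; nra.
Qed.

Lemma net0_sum (I : Type) (r : seq I) (phi : I -> seq G -> C) :
  (forall i, net0 (phi i)) -> net0 (fun F => \sum_(i <- r) phi i F).
Proof.
move=> h; elim: r => [|i r IH].
  move=> e e0; exists [::]; split => // F _ _; rewrite big_nil nc0; exact: ltW.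
have -> : (fun F => \sum_(j <- i :: r) phi j F) = (fun F => phi i F + \sum_(j <- r) phi j F).
  by apply: functional_extensionality => F; rewrite big_cons.
exact: net0_add.
Qed.

Lemma net0_approx phi : (forall e : R, 0 < e -> exists psi, net0 psi /\
  forall F, uniq F -> nc (phi F - psi F) <= e) -> net0 phi.
Proof.
move=> h e e0; have e2 : 0 < e / 2 by rewrite divr_gt0.
have [psi [hpsi hd]] := h _ e2; have [F0 [u0 k0]] := hpsi _ e2.
exists F0; split => // F uF sF.
have -> : phi F = (phi F - psi F) + psi F by rewrite subrK.
apply: le_trans (ncD _ _) _; have := hd F uF; have := k0 F uF sF; lra.
Qed.

Lemma net0_const (c : C) phi : net0 phi -> net0 (fun F => c - phi F) -> c = 0.
Proof.
move=> h1 h2; apply: nc_eq0; apply/eqP; rewrite eq_le nc_ge0 andbT.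
apply: le0_small => e e0; have e2 : 0 < e / 2 by rewrite divr_gt0.
have [F0 [u0 k0]] := h1 _ e2; have [F1 [u1 k1]] := h2 _ e2.
set F := Fu F0 F1.
have := k0 F (Fu_uniq _ _) (@Fu_l F0 F1); have := k1 F (Fu_uniq _ _) (@Fu_r F0 F1).
have := ncD (c - phi F) (phi F); rewrite subrK; lra.
Qed.

Lemma big_sub_split (T : nmodType) (F0 F : seq G) (phi : G -> T) :
  uniq F0 -> uniq F -> {subset F0 <= F} ->
  \sum_(g <- F) phi g = \sum_(g <- F0) phi g + \sum_(g <- [seq g <- F | g \notin F0]) phi g.
Proof.
move=> u0 u sF; rewrite (bigID (fun g => g \in F0)) /=; congr (_ + _).
  rewrite -big_filter; apply: perm_big; apply: uniq_perm => //; first exact: filter_uniq.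
  by move=> g; rewrite mem_filter; case gF0: (g \in F0) => //=; rewrite sF.
by rewrite big_filter.
Qed.

End Nets.


Section Rep.
Variable R : realType.
Local Notation C := R[i].
Local Notation nc := (@Normc.normc R).
Local Notation "x %:C" := (real_complex R x) (at level 1, format "x %:C").
Variable V : lmodType C.
Variable ip : V -> V -> C.
Hypothesis hH : is_hilbert_space ip.
Let ipD : forall (a : C) (x y z : V), ip (a *: x + y) z = a * ip x z + ip y z.
Proof. by case: hH. Qed.
Let ipC : forall x y : V, ip x y = (ip y x)^*.
Proof. by case: hH. Qed.
Local Notation nsq := (nsq ip).
Local Notation Nm := (Nm ip).
Variable G : groupType.
Variable pi : G -> V -> V.
Variable mu : G -> G -> C.
Hypothesis piU : forall g, unitary ip (pi g).
Hypothesis hmu1 : forall g h, `|mu g h| = 1.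
Hypothesis hmu : forall g h x, pi g (pi h x) = mu g h *: pi (g * h)%g x.

Lemma pi_lin g : is_linear_op (pi g). Proof. by case: (piU g). Qed.
Lemma pi_iso g x y : ip (pi g x) (pi g y) = ip x y. Proof. by case: (piU g). Qed.
Lemma pi_surj g y : exists x, pi g x = y. Proof. by case: (piU g). Qed.
Lemma piD g x y : pi g (x + y) = pi g x + pi g y.
Proof. by rewrite -[x]scale1r pi_lin !scale1r. Qed.
Lemma pi0 g : pi g 0 = 0.
Proof. by apply: (@addrI _ (pi g 0)); rewrite -piD !addr0. Qed.
Lemma piZ g a x : pi g (a *: x) = a *: pi g x.
Proof. by rewrite -[a *: x]addr0 pi_lin pi0 addr0. Qed.
Lemma piN g x : pi g (- x) = - pi g x.
Proof. by rewrite -scaleN1r piZ scaleN1r. Qed.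
Lemma piB g x y : pi g (x - y) = pi g x - pi g y.
Proof. by rewrite piD piN. Qed.
Lemma pi_sum g (I : Type) (r : seq I) (P : pred I) (f : I -> V) :
  pi g (\sum_(i <- r | P i) f i) = \sum_(i <- r | P i) pi g (f i).
Proof.
elim: r => [|a r IH]; first by rewrite !big_nil pi0.
by rewrite !big_cons; case: (P a); rewrite ?piD IH.
Qed.
Lemma nsq_pi g x : nsq (pi g x) = nsq x.
Proof. by rewrite /Defs.nsq pi_iso. Qed.

Lemma mu_nc g h : nc (mu g h) = 1.
Proof. by apply: complexI; rewrite ncC hmu1. Qed.
Lemma nc1_conj (c : C) : nc c = 1 -> c^* * c = 1.
Proof. by move=> h; rewrite mulrC -nc_sq h expr1n. Qed.
Lemma nc1_neq0 (c : C) : nc c = 1 -> c != 0.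
Proof. by move=> h; apply/eqP => c0; move: h; rewrite c0 nc0 => /eqP; rewrite eq_sym oner_eq0. Qed.
Lemma nc1_invconj (c : C) : nc c = 1 -> (c^-1)^* * c^-1 = 1.
Proof. by move=> h; apply: nc1_conj; rewrite Normc.normcV h invr1. Qed.

Definition nu := mu 1%g 1%g.
Lemma pi1 x : pi 1%g x = nu *: x.
Proof.
have [y <-] := pi_surj 1%g x.
by rewrite hmu mulg1.
Qed.
Definition mV g := mu g^-1 g * nu.
Lemma piV g x : pi g^-1 (pi g x) = mV g *: x.
Proof. by rewrite hmu mulVg pi1 scalerA. Qed.
Lemma mV_nc g : nc (mV g) = 1.
Proof. by rewrite /mV ncM !mu_nc mulr1. Qed.

Lemma bessel_pos a : bessel_vec ip pi a -> exists B : R, 0 <= B /\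
  forall x (s : seq G), uniq s -> \sum_(g <- s) nc (ip x (pi g a)) ^+ 2 <= B * nsq x.
Proof.
move=> [B hB]; exists `|B|; split => // x s us.
apply: le_trans (hB x s us) _; apply: ler_wpM2r; [exact: (@nsq_ge0 R V ip hH x) | exact: ler_norm].
Qed.

Lemma synth b (Bb : R) (c : G -> C) (F : seq G) : 0 <= Bb ->
  (forall x (s : seq G), uniq s -> \sum_(g <- s) nc (ip x (pi g b)) ^+ 2 <= Bb * nsq x) ->
  uniq F -> nsq (\sum_(g <- F) c g *: pi g b) <= (Bb + 1) * \sum_(g <- F) nc (c g) ^+ 2.
Proof.
move=> B0 hB uF; set s := \sum_(g <- F) _.
set Cc := \sum_(g <- F) nc (c g) ^+ 2.
have t0 : 0 < Bb + 1 by lra.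
have h1 : nsq s <= \sum_(g <- F) nc (c g) * nc (ip s (pi g b)).
  rewrite /Defs.nsq {2}/s (ip_sumr hH) Re_sum; apply: ler_sum => g _.
  rewrite (ipZr hH); apply: le_trans (Re_le_nc _) _; rewrite ncM ncJ.
  by rewrite ipC ncJ.
have h2 : 2 * (\sum_(g <- F) nc (c g) * nc (ip s (pi g b))) <=
    (Bb + 1) * Cc + (\sum_(g <- F) nc (ip s (pi g b)) ^+ 2) / (Bb + 1).
  rewrite mulr_sumr /Cc mulr_sumr mulr_suml -big_split; apply: ler_sum => g _.
  exact: amgm.
have h3 := hB s F uF.
have hs := nsq_ge0 hH s.
have hC : 0 <= Cc by apply: sumr_ge0 => g _; apply: sqr_ge0.
set Q := \sum_(g <- F) nc (ip s (pi g b)) ^+ 2 in h2 h3.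
have hQ : Q / (Bb + 1) <= Bb / (Bb + 1) * nsq s.
  by rewrite mulrAC ler_pM2r ?invr_gt0.
have hq : Bb / (Bb + 1) <= 1 by rewrite ler_pdivrMr //; lra.
have hq0 : 0 <= Bb / (Bb + 1) by rewrite divr_ge0 // ltW.
nra.
Qed.

Lemma tail a (Ba : R) x : 0 <= Ba ->
  (forall x (s : seq G), uniq s -> \sum_(g <- s) nc (ip x (pi g a)) ^+ 2 <= Ba * nsq x) ->
  forall e : R, 0 < e -> exists F0, uniq F0 /\ forall D : seq G, uniq D ->
    (forall g, g \in D -> g \notin F0) -> \sum_(g <- D) nc (ip x (pi g a)) ^+ 2 <= e.
Proof.
move=> B0 hB e e0.
pose E r := exists s : seq G, uniq s /\ r = \sum_(g <- s) nc (ip x (pi g a)) ^+ 2.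
have E0 : E 0 by exists [::]; rewrite big_nil.
have EM : forall r, E r -> r <= Ba * nsq x by move=> r [s [us ->]]; apply: hB.
have [m [hub had]] := sup_ex E0 EM.
have [r [[F0 [u0 ->]] lt]] := had e e0.
exists F0; split => // D uD dis.
have uc : uniq (F0 ++ D).
  rewrite cat_uniq u0 uD andbT /=; apply/hasPn => g gD; exact: dis.
have := hub _ (ex_intro _ (F0 ++ D) (conj uc erefl)); rewrite big_cat /=; lra.
Qed.

Definition Sab a b (F : seq G) x := \sum_(g <- F) ip x (pi g a) *: pi g b.

Lemma Sab_cauchy a b x : bessel_vec ip pi a -> bessel_vec ip pi b ->
  netcauchy ip (fun F => Sab a b F x).
Proof.
move=> /bessel_pos [Ba [Ba0 hBa]] /bessel_pos [Bb [Bb0 hBb]] e e0.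
have k0 : 0 < 4 * (Bb + 1) by lra.
have [F0 [u0 hF0]] := tail x Ba0 hBa (divr_gt0 e0 k0).
exists F0; split => // F F' uF uF' sF sF'.
rewrite /Sab (big_sub_split _ u0 uF sF) (big_sub_split _ u0 uF' sF').
rewrite opprD addrACA subrr add0r.
set D := [seq g <- F | g \notin F0]; set D' := [seq g <- F' | g \notin F0].
have uD : uniq D by apply: filter_uniq.
have uD' : uniq D' by apply: filter_uniq.
have dD : forall g, g \in D -> g \notin F0 by move=> g; rewrite mem_filter => /andP [].
have dD' : forall g, g \in D' -> g \notin F0 by move=> g; rewrite mem_filter => /andP [].
have h1 := synth (fun g => ip x (pi g a)) Bb0 hBb uD.
have h2 := synth (fun g => ip x (pi g a)) Bb0 hBb uD'.
have t1 := hF0 D uD dD; have t2 := hF0 D' uD' dD'.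
apply: le_trans (nsqD2 hH _ _) _; rewrite (nsqN hH).
have hd : (Bb + 1) * (e / (4 * (Bb + 1))) = e / 4 by field; lra.
have p1 : (Bb + 1) * \sum_(g <- D) nc (ip x (pi g a)) ^+ 2 <= e / 4.
  by rewrite -hd ler_wpM2l //; lra.
have p2 : (Bb + 1) * \sum_(g <- D') nc (ip x (pi g a)) ^+ 2 <= e / 4.
  by rewrite -hd ler_wpM2l //; lra.
lra.
Qed.

Definition Top a b x : V :=
  epsilon (inhabits 0) (netlim ip (fun F => Sab a b F x)).

End Rep.


Lemma nc1_invconj' (R : realType) (c : R[i]) : Normc.normc c = 1 -> (c^-1)^* = c.
Proof.
move=> h; have c0 : c != 0.
  by apply/eqP => c0; move: h; rewrite c0 nc0 => /eqP; rewrite eq_sym oner_eq0.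
have hc : c^* * c = 1 by rewrite mulrC -nc_sq h expr1n.
have e : c^* = c^-1 by rewrite -[c^*]mulr1 -(mulfV c0) mulrA hc mul1r.
by rewrite -e conjCK.
Qed.

Section Top.
Variable R : realType.
Local Notation C := R[i].
Local Notation nc := (@Normc.normc R).
Local Notation "x %:C" := (real_complex R x) (at level 1, format "x %:C").
Variable V : lmodType C.
Variable ip : V -> V -> C.
Hypothesis hH : is_hilbert_space ip.
Let ipD : forall (a : C) (x y z : V), ip (a *: x + y) z = a * ip x z + ip y z.
Proof. by case: hH. Qed.
Let ipC : forall x y : V, ip x y = (ip y x)^*.
Proof. by case: hH. Qed.
Local Notation nsq := (nsq ip).
Local Notation Nm := (Nm ip).
Variable G : groupType.
Variable pi : G -> V -> V.
Variable mu : G -> G -> C.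
Hypothesis piU : forall g, unitary ip (pi g).
Hypothesis hmu1 : forall g h, `|mu g h| = 1.
Hypothesis hmu : forall g h x, pi g (pi h x) = mu g h *: pi (g * h)%g x.
Variables a b : V.
Hypothesis ha : bessel_vec ip pi a.
Hypothesis hb : bessel_vec ip pi b.

Local Notation S := (Sab ip pi a b).
Local Notation T := (Top ip pi a b).

Lemma Top_lim x : netlim ip (fun F => S F x) (T x).
Proof.
exact: (epsilon_spec (inhabits 0) _ (net_complete hH (Sab_cauchy hH x ha hb))).
Qed.

Lemma Sab_lin F (al : C) x y : S F (al *: x + y) = al *: S F x + S F y.
Proof.
rewrite /Sab scaler_sumr -big_split; apply: eq_bigr => g _.
by rewrite ipD scalerDl scalerA.
Qed.

Lemma Top_linear : is_linear_op T.
Proof.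
move=> al x y; apply: (netlim_unique hH (Top_lim (al *: x + y))).
have -> : (fun F => S F (al *: x + y)) = (fun F => al *: S F x + S F y).
  by apply: functional_extensionality => F; rewrite Sab_lin.
exact: (netlim_lin hH al (Top_lim x) (Top_lim y)).
Qed.

Lemma Top_bound : exists M : R, forall x, nsq (T x) <= M * nsq x.
Proof.
have [Ba [Ba0 hBa]] := bessel_pos hH ha; have [Bb [Bb0 hBb]] := bessel_pos hH hb.
exists (2 * ((Bb + 1) * Ba)) => x.
apply/ler_addgt0Pr => e e0; have e2 : 0 < e / 2 by rewrite divr_gt0.
have [F0 [u0 h0]] := Top_lim x e2.
have h1 := h0 F0 u0 (fun g gF => gF).
have h2 := synth hH (fun g => ip x (pi g a)) Bb0 hBb u0.
have h3 := hBa x F0 u0.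
have := nsqD2 hH (T x - S F0 x) (S F0 x); rewrite subrK.
rewrite -(nsqN hH) opprB in h1.
have hx := nsq_ge0 hH x.
have : (Bb + 1) * \sum_(g <- F0) nc (ip x (pi g a)) ^+ 2 <= (Bb + 1) * (Ba * nsq x).
  by rewrite ler_wpM2l //; lra.
rewrite /S /Sab in h1 *; lra.
Qed.

Lemma Sab_shift h F x : S (map (fun g => (h * g)%g) F) (pi h x) = pi h (S F x).
Proof.
rewrite /Sab big_map (pi_sum piU); apply: eq_bigr => g _.
rewrite (piZ piU) hmu.
have m1 := mu_nc hmu1 h g.
have m0 := nc1_neq0 m1.
have e1 : pi (h * g)%g a = (mu h g)^-1 *: pi h (pi g a).
  by rewrite hmu scalerA mulVf // scale1r.
rewrite e1 (ipZr hH) (pi_iso piU) nc1_invconj' // scalerA; congr (_ *: _); ring.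
Qed.

Lemma Top_comm h x : T (pi h x) = pi h (T x).
Proof.
apply: (netlim_unique hH (Top_lim (pi h x))) => e e0.
have [F0 [u0 h0]] := Top_lim x e0.
exists (map (fun g => (h * g)%g) F0); split.
  by rewrite map_inj_uniq //; apply: mulgI.
move=> F uF sF.
set F' := map (fun g => (h^-1 * g)%g) F.
have eF : F = map (fun g => (h * g)%g) F'.
  by rewrite /F' -map_comp; rewrite -[LHS]map_id; apply: eq_map => g /=; rewrite mulVKg.
have uF' : uniq F' by rewrite map_inj_uniq //; apply: mulgI.
have sF' : {subset F0 <= F'}.
  move=> g gF0; have : (h * g)%g \in F by apply: sF; apply: map_f.
  by move=> hgF; apply/mapP; exists (h * g)%g => //; rewrite mulKg.
rewrite eF Sab_shift -(piB piU) (nsq_pi piU); exact: h0.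
Qed.

Lemma Top_commutant : commutant ip (range_op pi) T.
Proof.
split; first by split; [exact: Top_linear | exact: Top_bound].
by move=> A [g ->] x; apply: Top_comm.
Qed.

Lemma Top_ip x y : net0 (fun F => ip (T x) y - ip (S F x) y).
Proof.
move=> e e0.
have hp : 0 < Nm y + 1 by have := Nm_ge0 ip y; lra.
set d := e / (Nm y + 1).
have d0 : 0 < d by rewrite divr_gt0.
have [F0 [u0 h0]] := Top_lim x (exprn_gt0 2 d0).
exists F0; split => // F uF sF.
rewrite -(ipBl hH); apply: le_trans (ncip_le hH _ _) _.
have : Nm (T x - S F x) <= d.
  apply: (Nm_le_of hH); first exact: ltW.
  by rewrite -(nsqN hH) opprB; apply: h0.
have hd : d * (Nm y + 1) = e by rewrite /d divfK // lt0r_neq0.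
have := Nm_ge0 ip y; have := Nm_ge0 ip (T x - S F x); nra.
Qed.

End Top.


Section LinMap.
Variable R : realType.
Local Notation C := R[i].
Variable W : lmodType C.
Variable ip : W -> W -> C.
Hypothesis hH : is_hilbert_space ip.
Variable L : W -> W.
Hypothesis Llin : forall (a : C) x y, L (a *: x + y) = a *: L x + L y.

Lemma L0 : L 0 = 0.
Proof.
have h := Llin 1 0 0; rewrite scaler0 addr0 scale1r in h.
by apply: (@addrI _ (L 0)); rewrite addr0 -h.
Qed.
Lemma LD x y : L (x + y) = L x + L y.
Proof. by rewrite -{1}[x]scale1r Llin scale1r. Qed.
Lemma LZ a x : L (a *: x) = a *: L x.
Proof. by rewrite -[a *: x]addr0 Llin L0 addr0. Qed.
Lemma LB x y : L (x - y) = L x - L y.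
Proof. by rewrite LD -scaleN1r LZ scaleN1r. Qed.
Lemma L_sum (I : Type) (r : seq I) (P : pred I) (f : I -> W) :
  L (\sum_(i <- r | P i) f i) = \sum_(i <- r | P i) L (f i).
Proof.
elim: r => [|a r IH]; first by rewrite !big_nil L0.
by rewrite !big_cons; case: (P a); rewrite ?LD IH.
Qed.

Lemma cspan_map (S : W -> Prop) :
  (forall x, nsq ip (L x) <= nsq ip x) -> (forall v, S v -> spanP S (L v)) ->
  forall y, cspan ip S y -> cspan ip S (L y).
Proof.
move=> hL hS y hy e e0; have [u [[s [hs ->]] hu]] := hy e e0.
exists (L (\sum_(p <- s) p.1 *: p.2)); split.
  rewrite L_sum; clear hu; elim: s hs => [|p s IH] hs; first by rewrite big_nil; exact: spanP0.
  rewrite big_cons; apply: spanPD; last by apply: IH => q qs; apply: hs; rewrite inE qs orbT.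
  by rewrite LZ; apply: spanPZ; apply: hS; apply: hs; rewrite mem_head.
by rewrite -LB; apply: le_trans (hL _) hu.
Qed.
End LinMap.

Section PfSec.
Variable R : realType.
Local Notation C := R[i].
Local Notation nc := (@Normc.normc R).
Variable V : lmodType C.
Variable ip : V -> V -> C.
Hypothesis hH : is_hilbert_space ip.
Let ipD : forall (a : C) (x y z : V), ip (a *: x + y) z = a * ip x z + ip y z.
Proof. by case: hH. Qed.
Let ipC : forall x y : V, ip x y = (ip y x)^*.
Proof. by case: hH. Qed.
Variable G : groupType.
Variable sigma : G -> V -> V.
Variable mu : G -> G -> C.
Hypothesis sigU : forall g, unitary ip (sigma g).
Hypothesis hmu1 : forall g h, `|mu g h| = 1.
Hypothesis hmu : forall g h x, sigma g (sigma h x) = mu g h *: sigma (g * h)%g x.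
Variable k : nat.
Variable xi : 'I_k -> V.
Local Notation Wk := {ffun 'I_k -> V}.
Local Notation ipk := (ipk ip (k:=k)).
Let hHk : is_hilbert_space ipk := ipk_hilbert hH k.
Let ipkD : forall (a : C) (x y z : Wk), ipk (a *: x + y) z = a * ipk x z + ipk y z.
Proof. by case: hHk. Qed.
Let ipkC : forall x y : Wk, ipk x y = (ipk y x)^*.
Proof. by case: hHk. Qed.
Let ipkdef : forall x : Wk, ipk x x = 0 -> x = 0.
Proof. by case: hHk. Qed.

Definition Sk : Wk -> Prop := liftS (orbitk sigma xi).
Lemma SkP (w : Wk) : Sk w <-> exists g, w = [ffun i => sigma g (xi i)].
Proof.
split=> [[g hg]|[g ->]].
  by exists g; apply/ffunP => i; rewrite ffunE; exact: (congr1 (fun f => f i) hg).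
by exists g; apply: functional_extensionality => i; rewrite ffunE.
Qed.

Local Notation K := (cspan ipk Sk).

Definition Pf (z : Wk) : Wk :=
  epsilon (inhabits 0) (fun p => K p /\ forall v, Sk v -> ipk (z - p) v = 0).

Lemma Pf_spec z : K (Pf z) /\ forall v, Sk v -> ipk (z - Pf z) v = 0.
Proof. exact: (epsilon_spec (inhabits 0) _ (projection hHk Sk z)). Qed.

Lemma Pf_uniq z p : K p -> (forall v, Sk v -> ipk (z - p) v = 0) -> Pf z = p.
Proof.
move=> Kp hp; have [Kq hq] := Pf_spec z.
have Kd : K (Pf z - p) by apply: (cspanB hHk).
have o1 := orth_cspan hHk hq Kd; have o2 := orth_cspan hHk hp Kd.
apply/eqP; rewrite -subr_eq0; apply/eqP; apply: ipkdef.
have E : (z - p) - (z - Pf z) = Pf z - p by rewrite opprB addrC addrA subrK.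
by rewrite -{1}E (ipBl hHk) o1 o2 subrr.
Qed.

Lemma Pf_lin (a : C) z z' : Pf (a *: z + z') = a *: Pf z + Pf z'.
Proof.
have [K1 o1] := Pf_spec z; have [K2 o2] := Pf_spec z'.
apply: Pf_uniq; first by apply: (cspanD hHk) => //; apply: (cspanZ hHk).
move=> v Sv.
have -> : a *: z + z' - (a *: Pf z + Pf z') = a *: (z - Pf z) + (z' - Pf z').
  by rewrite scalerBr opprD addrACA.
by rewrite ipkD o1 // o2 // mulr0 addr0.
Qed.

Lemma Pf0 : Pf 0 = 0.
Proof.
apply: Pf_uniq; first exact: (cspan0 hHk).
by move=> v _; rewrite subr0 (ip0l hHk).
Qed.

Lemma Pf_sum (I : Type) (r : seq I) (f : I -> Wk) :
  Pf (\sum_(i <- r) f i) = \sum_(i <- r) Pf (f i).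
Proof.
elim: r => [|a r IH]; first by rewrite !big_nil Pf0.
by rewrite !big_cons -{1}[f a]scale1r Pf_lin IH scale1r.
Qed.

Lemma Pf_id z : K z -> Pf z = z.
Proof. by move=> Kz; apply: Pf_uniq => // v _; rewrite subrr (ip0l hHk). Qed.

Lemma Pf_bound z : nsq ipk (Pf z) <= nsq ipk z.
Proof.
have [Kp op] := Pf_spec z.
have o := orth_cspan hHk op Kp.
have := nsqD hHk (Pf z) (z - Pf z); rewrite [Pf z + _]addrC subrK => ->.
rewrite ipkC o conjC0 /=.
have := nsq_ge0 hHk (z - Pf z); rewrite mulr0 addr0; lra.
Qed.

Definition Sig g (z : Wk) : Wk := [ffun i => sigma g (z i)].

Lemma Sig_lin g (a : C) x y : Sig g (a *: x + y) = a *: Sig g x + Sig g y.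
Proof. by apply/ffunP => i; rewrite !ffunE (pi_lin sigU). Qed.

Lemma Sig_iso g x y : ipk (Sig g x) (Sig g y) = ipk x y.
Proof. by apply: eq_bigr => i _; rewrite !ffunE (pi_iso sigU). Qed.

Lemma Sig_orbit g v : Sk v -> spanP Sk (Sig g v).
Proof.
move=> /SkP [h ->].
have -> : Sig g [ffun i => sigma h (xi i)] = mu g h *: [ffun i => sigma (g * h)%g (xi i)].
  by apply/ffunP => i; rewrite !ffunE hmu.
by apply: spanPZ; apply: spanP_in; apply/SkP; exists (g * h)%g.
Qed.


Lemma K_Sig g z : K z -> K (Sig g z).
Proof.
apply: (@cspan_map _ _ ipk _ (Sig_lin g)); last exact: Sig_orbit.
by move=> x; rewrite /Defs.nsq Sig_iso.
Qed.

Lemma Sig_perp g w : (forall v, Sk v -> ipk w v = 0) -> forall v, Sk v -> ipk (Sig g w) v = 0.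
Proof.
move=> hw v /SkP [h ->].
set h' := (g^-1 * h)%g.
have m0 := nc1_neq0 (mu_nc hmu1 g h').
have -> : [ffun i => sigma h (xi i)] = (mu g h')^-1 *: Sig g [ffun i => sigma h' (xi i)].
  apply/ffunP => i; rewrite !ffunE hmu /h' mulVKg scalerA mulVf // scale1r //.
rewrite (ipZr hHk) Sig_iso hw ?mulr0 //; apply/SkP; by exists h'.
Qed.

Lemma Pf_Sig g z : Pf (Sig g z) = Sig g (Pf z).
Proof.
have [Kp op] := Pf_spec z.
apply: Pf_uniq; first exact: K_Sig.
move=> v Sv.
have -> : Sig g z - Sig g (Pf z) = Sig g (z - Pf z).
  by apply/ffunP => i; rewrite !ffunE (piB sigU).
exact: Sig_perp.
Qed.

Definition ej (j : 'I_k) (x : V) : Wk := [ffun l => if l == j then x else 0].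

Lemma nsq_ej j x : nsq ipk (ej j x) = nsq ip x.
Proof.
rewrite nsqk (bigD1 j) //= big1 ?addr0; first by rewrite ffunE eqxx.
by move=> l /negPf hl; rewrite ffunE hl (nsq0 hH).
Qed.

Lemma z_decomp (z : Wk) : z = \sum_(j < k) ej j (z j).
Proof.
apply/ffunP => i; rewrite sum_ffunE (bigD1 i) //= big1 ?addr0; first by rewrite ffunE eqxx.
by move=> l hl; rewrite ffunE eq_sym (negPf hl).
Qed.

Definition Aij (i j : 'I_k) (x : V) : V := Pf (ej j x) i.

Lemma Aij_lin i j : is_linear_op (Aij i j).
Proof.
move=> a x y; rewrite /Aij.
have -> : ej j (a *: x + y) = a *: ej j x + ej j y.
  by apply/ffunP => l; rewrite !ffunE; case: (l == j); rewrite ?scaler0 ?addr0.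
by rewrite Pf_lin !ffunE.
Qed.

Lemma Aij_commutant i j : commutant ip (range_op sigma) (Aij i j).
Proof.
split.
  split; first exact: Aij_lin.
  exists 1 => x; rewrite mul1r -(nsq_ej j x).
  apply: le_trans (Pf_bound _); exact: (nsqk_ge hH).
move=> A [g ->] x; rewrite /Aij.
have -> : ej j (sigma g x) = Sig g (ej j x).
  by apply/ffunP => l; rewrite !ffunE; case: (l == j); rewrite ?(pi0 sigU).
by rewrite Pf_Sig ffunE.
Qed.

Lemma Pf_decomp z i : Pf z i = \sum_(j < k) Aij i j (z j).
Proof. by rewrite {1}(z_decomp z) Pf_sum sum_ffunE. Qed.

Lemma K_inv (T : V -> V) : commutant ip (commutant ip (range_op sigma)) T ->
  forall z, K z -> K [ffun i => T (z i)].
Proof.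
move=> [[Tl _] hT] z Kz.
have e : Pf [ffun i => T (z i)] = [ffun i => T (z i)].
  apply/ffunP => i; rewrite Pf_decomp ffunE.
  have -> : \sum_(j < k) Aij i j ([ffun i0 => T (z i0)] j) = \sum_(j < k) T (Aij i j (z j)).
    by apply: eq_bigr => j _; rewrite ffunE hT //; apply: Aij_commutant.
  by rewrite -(L_sum Tl) -Pf_decomp Pf_id.
by rewrite -e; case: (Pf_spec [ffun i => T (z i)]).
Qed.

Lemma xi_K : K [ffun i => xi i].
Proof.
have n0 := nc1_neq0 (mu_nc hmu1 1%g 1%g).
have -> : [ffun i => xi i] = (nu mu)^-1 *: [ffun i => sigma 1%g (xi i)].
  by apply/ffunP => i; rewrite !ffunE (pi1 sigU hmu) scalerA mulVf // scale1r.
apply: (cspan_span hHk); apply: spanPZ; apply: spanP_in; apply/SkP; by exists 1%g.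
Qed.

End PfSec.


Lemma nc_sum (R : realType) (I : Type) (r : seq I) (f : I -> R[i]) :
  Normc.normc (\sum_(i <- r) f i) <= \sum_(i <- r) Normc.normc (f i).
Proof.
elim: r => [|a r IH]; first by rewrite !big_nil nc0.
by rewrite !big_cons; apply: le_trans (ncD _ _) _; rewrite lerD2l.
Qed.

Section Main.
Variable R : realType.
Local Notation C := R[i].
Local Notation nc := (@Normc.normc R).
Local Notation "x %:C" := (real_complex R x) (at level 1, format "x %:C").
Variable V : lmodType C.
Variable ip : V -> V -> C.
Hypothesis hH : is_hilbert_space ip.
Let ipD : forall (a : C) (x y z : V), ip (a *: x + y) z = a * ip x z + ip y z.
Proof. by case: hH. Qed.
Let ipC : forall x y : V, ip x y = (ip y x)^*.
Proof. by case: hH. Qed.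
Local Notation nsq := (nsq ip).
Local Notation Nm := (Nm ip).
Variable G : groupType.
Variable pi : G -> V -> V.
Variable mu : G -> G -> C.
Hypothesis piU : forall g, unitary ip (pi g).
Hypothesis hmu1 : forall g h, `|mu g h| = 1.
Hypothesis hmu : forall g h x, pi g (pi h x) = mu g h *: pi (g * h)%g x.

Lemma Top_pos a x g : bessel_vec ip pi a ->
  nc (ip x (pi g a)) ^+ 2 <= complex.Re (ip (Top ip pi a a x) x).
Proof.
move=> ha; apply/ler_addgt0Pr => e e0.
have [F0 [u0 h0]] := Top_ip hH ha ha x x e0.
set F := Fu F0 [:: g].
have := h0 F (Fu_uniq _ _) (@Fu_l _ F0 [:: g]) => /= hF.
have eS : complex.Re (ip (Sab ip pi a a F x) x) = \sum_(g' <- F) nc (ip x (pi g' a)) ^+ 2.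
  rewrite /Sab (ip_suml hH) Re_sum; apply: eq_bigr => g' _.
  by rewrite (ipZl hH) [ip (pi g' a) x]ipC -nc_sq.
have gF : g \in F by apply: (@Fu_r _ F0 [:: g]); rewrite mem_head.
have hg : nc (ip x (pi g a)) ^+ 2 <= \sum_(g' <- F) nc (ip x (pi g' a)) ^+ 2.
  rewrite (bigD1_seq g) //=; last exact: Fu_uniq.
  rewrite lerDl; apply: sumr_ge0 => g' _; exact: sqr_ge0.
have hre := Re_le_nc (ip (Sab ip pi a a F x) x - ip (Top ip pi a a x) x).
rewrite ReB -ncN opprB in hre; lra.
Qed.

Variable sigma : G -> V -> V.
Variable mus : G -> G -> C.
Hypothesis sigU : forall g, unitary ip (sigma g).
Hypothesis hmus1 : forall g h, `|mus g h| = 1.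
Hypothesis hmus : forall g h x, sigma g (sigma h x) = mus g h *: sigma (g * h)%g x.
Hypothesis hcp : commutant_pair ip pi sigma.
Hypothesis hdense : bessel_dense ip pi.
Variable k : nat.
Variables xi eta : 'I_k -> V.
Hypothesis hxi : forall i, bessel_vec ip pi (xi i).
Hypothesis heta : forall i, bessel_vec ip pi (eta i).
Hypothesis hTh : forall y, l2k_closed_span (Theta_range ip pi xi) y <->
             l2k_closed_span (Theta_range ip pi eta) y.

Local Notation Wk := {ffun 'I_k -> V}.
Local Notation ipk := (ipk ip (k:=k)).
Let hHk : is_hilbert_space ipk := ipk_hilbert hH k.
Local Notation K := (cspan ipk (Sk sigma xi)).
Local Notation PF := (Pf ip sigma xi).

Definition etaf : Wk := [ffun i => eta i].
Definition Y : Wk := etaf - PF etaf.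

Lemma Y_perp : forall z, K z -> ipk Y z = 0.
Proof.
have [_ o] := Pf_spec hH sigma xi etaf.
by move=> z Kz; apply: (orth_cspan hHk o Kz).
Qed.

Lemma T_sigma2 T : commutant ip (range_op pi) T ->
  commutant ip (commutant ip (range_op sigma)) T.
Proof. by move=> hT; apply/(hcp T). Qed.

Lemma fact_K (T : V -> V) (z : Wk) : commutant ip (range_op pi) T -> K z ->
  \sum_(i < k) ip (T (z i)) (Y i) = 0.
Proof.
move=> hT Kz; have := K_inv hH sigU hmus1 hmus (T_sigma2 hT) Kz.
move/Y_perp; rewrite /ipk => h.
rewrite -[LHS]conjCK rmorph_sum /=.
have -> : \sum_(i < k) (ip (T (z i)) (Y i))^* = \sum_(i < k) ip (Y i) ([ffun i0 => T (z i0)] i).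
  by apply: eq_bigr => i _; rewrite ffunE -ipC.
by rewrite h conjC0.
Qed.

Lemma net0_nc (phi psi : seq G -> C) : (forall F, nc (psi F) = nc (phi F)) ->
  net0 phi -> net0 psi.
Proof. by move=> h hp e e0; have [F0 [u0 h0]] := hp e e0; exists F0; split => // F uF sF; rewrite h h0. Qed.

Definition vv b (i : 'I_k) (g : G) : C := mV mu g * ip (Y i) (pi g b).
Definition Qz b (z : 'I_k -> V) (F : seq G) (x : V) : C :=
  \sum_(i < k) \sum_(g <- F) ip x (pi g^-1 (z i)) * vv b i g.

Lemma Sab_Q b a' z F :
  \sum_(i < k) ip (Sab ip pi a' b F (z i)) (Y i) = (Qz b z F a')^*.
Proof.
rewrite /Qz rmorph_sum; apply: eq_bigr => i _.
rewrite /Sab (ip_suml hH) rmorph_sum; apply: eq_bigr => g _.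
rewrite (ipZl hH) /vv -(pi_iso piU g^-1 (z i) (pi g a')) (piV piU hmu) (ipZr hH).
rewrite !rmorphM /= -!ipC; ring.
Qed.

Lemma factA b a' z : bessel_vec ip pi a' -> bessel_vec ip pi b ->
  net0 (fun F => \sum_(i < k) ip (Top ip pi a' b (z i)) (Y i) - (Qz b z F a')^*).
Proof.
move=> ha hb.
have -> : (fun F => \sum_(i < k) ip (Top ip pi a' b (z i)) (Y i) - (Qz b z F a')^*) =
   (fun F => \sum_(i <- index_enum 'I_k) (ip (Top ip pi a' b (z i)) (Y i) - ip (Sab ip pi a' b F (z i)) (Y i))).
  by apply: functional_extensionality => F; rewrite -Sab_Q sumrB.
by apply: net0_sum => i; apply: Top_ip.
Qed.

Lemma QB b z F x y : Qz b z F (x - y) = Qz b z F x - Qz b z F y.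
Proof.
rewrite /Qz -sumrB; apply: eq_bigr => i _; rewrite -sumrB; apply: eq_bigr => g _.
by rewrite (ipBl hH) mulrBl.
Qed.

Lemma Qbound b (Bb : R) (d : 'I_k -> G -> C) (F : seq G) (t : R) : 0 <= Bb ->
  (forall x (s : seq G), uniq s -> \sum_(g <- s) nc (ip x (pi g b)) ^+ 2 <= Bb * nsq x) ->
  uniq F -> 0 < t ->
  2 * nc (\sum_(i < k) \sum_(g <- F) d i (g^-1)%g * vv b i g) <=
  t * (\sum_(i < k) \sum_(u <- map (fun g => g^-1)%g F) nc (d i u) ^+ 2) +
  (\sum_(i < k) Bb * nsq (Y i)) / t.
Proof.
move=> B0 hB uF t0.
apply: (@le_trans _ _ (2 * \sum_(i < k) \sum_(g <- F) nc (d i (g^-1)%g) * nc (ip (Y i) (pi g b)))).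
  rewrite ler_pM2l //; apply: le_trans (nc_sum _ _) _; apply: ler_sum => i _.
  apply: le_trans (nc_sum _ _) _; apply: ler_sum => g _.
  by rewrite ncM /vv ncM (mV_nc hmu1) mul1r.
rewrite mulr_sumr.
apply: (@le_trans _ _ (\sum_(i < k) (t * (\sum_(u <- map (fun g => g^-1)%g F) nc (d i u) ^+ 2) + Bb * nsq (Y i) / t))).
  apply: ler_sum => i _.
  rewrite big_map mulr_sumr.
  have h1 : \sum_(g <- F) 2 * (nc (d i (g^-1)%g) * nc (ip (Y i) (pi g b))) <=
      \sum_(g <- F) (t * nc (d i (g^-1)%g) ^+ 2 + nc (ip (Y i) (pi g b)) ^+ 2 / t).
    by apply: ler_sum => g _; apply: amgm.
  have h2 : \sum_(g <- F) (t * nc (d i (g^-1)%g) ^+ 2 + nc (ip (Y i) (pi g b)) ^+ 2 / t) =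
      t * \sum_(g <- F) nc (d i (g^-1)%g) ^+ 2 + (\sum_(g <- F) nc (ip (Y i) (pi g b)) ^+ 2) / t.
    by rewrite big_split /= mulr_sumr mulr_suml.
  have h3 := hB (Y i) F uF.
  have h4 : (\sum_(g <- F) nc (ip (Y i) (pi g b)) ^+ 2) / t <= Bb * nsq (Y i) / t.
    by rewrite ler_pM2r // invr_gt0.
  lra.
by rewrite big_split /= -mulr_sumr -mulr_suml.
Qed.

Lemma bessel_fam (z : 'I_k -> V) : (forall i, bessel_vec ip pi (z i)) ->
  exists Bz : R, 0 <= Bz /\ forall x (s : seq G), uniq s ->
    \sum_(i < k) \sum_(g <- s) nc (ip x (pi g (z i))) ^+ 2 <= Bz * nsq x.
Proof.
move=> hz.
have hB i := bessel_pos hH (hz i).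
pose B i := proj1_sig (constructive_indefinite_description _ (hB i)).
have hBi i := proj2_sig (constructive_indefinite_description _ (hB i)).
exists (\sum_(i < k) B i); split.
  by apply: sumr_ge0 => i _; case: (hBi i).
move=> x s us; rewrite mulr_suml; apply: ler_sum => i _; by case: (hBi i) => _ h; apply: h.
Qed.

Lemma Vb_ge0 (Bb : R) : 0 <= Bb -> 0 <= \sum_(i < k) Bb * nsq (Y i).
Proof. by move=> B0; apply: sumr_ge0 => i _; rewrite mulr_ge0 // (nsq_ge0 hH). Qed.

Lemma claim1 b : bessel_vec ip pi b ->
  (forall a', bessel_vec ip pi a' -> net0 (fun F => Qz b xi F a')) ->
  forall x, net0 (fun F => Qz b xi F x).
Proof.
move=> hb H1 x; have [Bb [B0 hBb]] := bessel_pos hH hb.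
have [Bx [Bx0 hBx]] := bessel_fam hxi.
apply: net0_approx => e e0.
set Vb := \sum_(i < k) Bb * nsq (Y i).
have V0 : 0 <= Vb := Vb_ge0 B0.
set t := (Vb + 1) / e.
have t0 : 0 < t by rewrite /t divr_gt0 //; lra.
set dl := e / (t * (Bx + 1)).
have dl0 : 0 < dl by rewrite /dl divr_gt0 // mulr_gt0 //; lra.
have [a' [ha' hd]] := hdense x dl0.
exists (fun F => Qz b xi F a'); split; first exact: H1.
move=> F uF; rewrite -QB.
have hq := Qbound (fun i u => ip (x - a') (pi u (xi i))) B0 hBb uF t0.
have uF' : uniq (map (fun g => (g^-1)%g) F) by rewrite map_inj_uniq //; exact: invg_inj.
have hD := hBx (x - a') _ uF'.
rewrite -/Vb in hq.
have hn := nsq_ge0 hH (x - a').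
have e1 : t * (Bx * nsq (x - a')) <= e.
  have h1 : t * (Bx * nsq (x - a')) <= t * (Bx * dl).
    by apply: ler_wpM2l; [exact: ltW | apply: ler_wpM2l => //; exact: ltW].
  have hB1 : 0 < Bx + 1 by lra.
  have h2 : t * (Bx * dl) = e * (Bx / (Bx + 1)).
    rewrite /dl; field; rewrite ?lt0r_neq0 //.
  have h3 : Bx / (Bx + 1) <= 1 by rewrite ler_pdivrMr //; lra.
  have := ler_wpM2l (ltW e0) h3; rewrite mulr1; lra.
have e2 : Vb / t <= e.
  rewrite /t invf_div mulrA ler_pdivrMr; last lra.
  nra.
have : t * (\sum_(i < k) \sum_(u <- [seq (g^-1)%g | g <- F]) nc (ip (x - a') (pi u (xi i))) ^+ 2)
     <= t * (Bx * nsq (x - a')) by apply: ler_wpM2l; [exact: ltW | exact: hD].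
rewrite /Qz in hq *; lra.
Qed.

Lemma claim2 b : bessel_vec ip pi b ->
  (forall a', bessel_vec ip pi a' -> net0 (fun F => Qz b xi F a')) ->
  forall x, net0 (fun F => Qz b eta F x).
Proof.
move=> hb H1 x; have [Bb [B0 hBb]] := bessel_pos hH hb.
have [Be [Be0 hBe]] := bessel_fam heta.
have hl : l2k_closed_span (Theta_range ip pi eta) (Thetak ip pi eta x).
  split; first by exists (Be * nsq x) => s us; exact: hBe.
  move=> e e0; exists 1%N, (fun _ => 1), (fun _ => Thetak ip pi eta x); split.
    by move=> j; exists x.
  move=> s us; rewrite big1; first exact: ltW.
  by move=> i _; apply: big1 => g _; rewrite big_ord1 mul1r subrr nc0 expr0n.
have [_ happ] := (hTh _).2 hl.
apply: net0_approx => e e0.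
set Vb := \sum_(i < k) Bb * nsq (Y i).
have V0 : 0 <= Vb := Vb_ge0 B0.
set t := (Vb + 1) / e.
have t0 : 0 < t by rewrite /t divr_gt0 //; lra.
have e'0 : 0 < e / t by rewrite divr_gt0.
have [n [c [f [hf hs]]]] := happ _ e'0.
pose xj j := proj1_sig (constructive_indefinite_description _ (hf j)).
have hxj j : f j = Thetak ip pi xi (xj j) := proj2_sig (constructive_indefinite_description _ (hf j)).
exists (fun F => \sum_(j < n) c j * Qz b xi F (xj j)); split.
  by apply: net0_sum => j; apply: net0_scale; apply: claim1.
move=> F uF.
have E2 : \sum_(j < n) c j * Qz b xi F (xj j) =
    \sum_(i < k) \sum_(g <- F) (\sum_(j < n) c j * f j i (g^-1)%g) * vv b i g.
  transitivity (\sum_(j < n) \sum_(i < k) \sum_(g <- F)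
      c j * (ip (xj j) (pi (g^-1)%g (xi i)) * vv b i g)).
    by apply: eq_bigr => j _; rewrite /Qz mulr_sumr; apply: eq_bigr => i _; rewrite mulr_sumr.
  rewrite exchange_big; apply: eq_bigr => i _; rewrite exchange_big; apply: eq_bigr => g _.
  by rewrite mulr_suml; apply: eq_bigr => j _; rewrite hxj /Thetak /Theta mulrA.
have E3 : Qz b eta F x - \sum_(j < n) c j * Qz b xi F (xj j) =
    \sum_(i < k) \sum_(g <- F) (Thetak ip pi eta x i (g^-1)%g - \sum_(j < n) c j * f j i (g^-1)%g) * vv b i g.
  rewrite E2 /Qz -sumrB; apply: eq_bigr => i _; rewrite -sumrB; apply: eq_bigr => g _.
  by rewrite mulrBl.
rewrite E3.
have uF' : uniq (map (fun g => (g^-1)%g) F) by rewrite map_inj_uniq //; exact: invg_inj.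
have hq := Qbound (fun i u => Thetak ip pi eta x i u - \sum_(j < n) c j * f j i u) B0 hBb uF t0.
have hD := hs _ uF'.
rewrite -/Vb in hq.
have h1 : t * (\sum_(i < k) \sum_(u <- [seq (g^-1)%g | g <- F])
     nc (Thetak ip pi eta x i u - \sum_(j < n) c j * f j i u) ^+ 2) <= e.
  apply: le_trans (ler_wpM2l (ltW t0) hD) _.
  by rewrite mulrC divfK // lt0r_neq0.
have e2 : Vb / t <= e.
  rewrite /t invf_div mulrA ler_pdivrMr; last lra.
  nra.
lra.
Qed.

Lemma transfer a' b : bessel_vec ip pi a' -> bessel_vec ip pi b ->
  \sum_(i < k) ip (Top ip pi a' b (eta i)) (Y i) = 0.
Proof.
move=> ha hb.
have H1 : forall a'', bessel_vec ip pi a'' -> net0 (fun F => Qz b xi F a'').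
  move=> a'' ha''; have hA := factA xi ha'' hb.
  have h0 : \sum_(i < k) ip (Top ip pi a'' b (xi i)) (Y i) = 0.
    have := fact_K (Top_commutant hH piU hmu1 hmu ha'' hb) (xi_K hH sigU hmus1 hmus xi).
    by under eq_bigr => i _ do rewrite ffunE.
  rewrite h0 in hA; apply: net0_nc hA => F; by rewrite sub0r ncN ncJ.
have h2 := claim2 hb H1 a'.
have hA := factA eta ha hb.
apply: (net0_const (phi := fun F => (Qz b eta F a')^*)) hA.
by apply: net0_nc h2 => F; rewrite ncJ.
Qed.

Lemma Y_orth_bessel i a : bessel_vec ip pi a -> ip (Y i) a = 0.
Proof.
move=> ha.
have Tl := Top_linear hH ha ha.
have eY j : Y j = eta j - PF etaf j by rewrite /Y /etaf !ffunE.
have hs : \sum_(j < k) ip (Top ip pi a a (Y j)) (Y j) = 0.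
  transitivity (\sum_(j < k) ip (Top ip pi a a (eta j)) (Y j) -
                \sum_(j < k) ip (Top ip pi a a (PF etaf j)) (Y j)).
    by rewrite -sumrB; apply: eq_bigr => j _; rewrite {1}eY (LB Tl) (ipBl hH).
  rewrite transfer // fact_K ?subrr //; first exact: Top_commutant.
  by case: (Pf_spec hH sigma xi etaf).
have hpos j := Top_pos (Y j) 1%g ha.
have hsum : \sum_(j < k) nc (ip (Y j) (pi 1%g a)) ^+ 2 = 0.
  apply/eqP; rewrite eq_le; apply/andP; split; last by apply: sumr_ge0 => j _; apply: sqr_ge0.
  apply: le_trans (ler_sum _ (fun j _ => hpos j)) _.
  by rewrite -Re_sum hs.
have := @psumr_eq0P _ _ _ _ (fun j _ => sqr_ge0 (nc (ip (Y j) (pi 1%g a)))) hsum i isT.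
move/eqP; rewrite sqrf_eq0 => /eqP /nc_eq0.
rewrite (pi1 piU hmu) (ipZr hH) => /eqP; rewrite mulf_eq0 conjC_eq0 => /orP [|/eqP //].
by rewrite (negPf (nc1_neq0 (mu_nc hmu1 1%g 1%g))).
Qed.

Lemma Y0 : Y = 0.
Proof.
suff h : forall i, Y i = 0 by apply/ffunP => i; rewrite h ffunE.
move=> i; set y := Y i.
have hy : forall a, bessel_vec ip pi a -> ip y a = 0 by move=> a; apply: Y_orth_bessel.
apply: (Nm_eq0 hH); apply/eqP; rewrite eq_le Nm_ge0 andbT.
apply: le0_small => d d0.
have [a [ha hd]] := hdense y (exprn_gt0 2 d0).
have n1 : Nm (y - a) <= d by apply: (Nm_le_of hH); [exact: ltW | exact: ltW].
have h1 : Nm y ^+ 2 <= Nm y * d.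
  rewrite (Nm_sq hH) /Defs.nsq.
  have -> : ip y y = ip y (y - a) by rewrite (ipBr hH) (hy a ha) subr0.
  apply: le_trans (Re_le_nc _) _; apply: le_trans (ncip_le hH _ _) _.
  by apply: ler_wpM2l => //; exact: Nm_ge0.
have := Nm_ge0 ip y; nra.
Qed.

Lemma etaf_K : K etaf.
Proof.
have [Kp _] := Pf_spec hH sigma xi etaf.
have : etaf = PF etaf by apply/eqP; rewrite -subr_eq0 -/Y Y0.
by move=> ->.
Qed.

Lemma dir : forall v, Hk_closed_span ip (orbitk sigma eta) v -> Hk_closed_span ip (orbitk sigma xi) v.
Proof.
move=> v /Hk_cspan hv; apply/Hk_cspan.
apply: (cspan_trans hHk) hv => w [g hg].
have -> : w = Sig sigma g etaf.
  by apply/ffunP => i; rewrite !ffunE; exact: (congr1 (fun f => f i) hg).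
exact: (K_Sig sigU hmus g etaf_K).
Qed.
End Main.

Unset Implicit Arguments. Set Strict Implicit.
Theorem lemma3p6 (R : realType) (V : lmodType R[i]) (ip : V -> V -> R[i])
  (G : groupType) (pi sigma : G -> V -> V) (k : nat) (xi eta : 'I_k -> V) :
  is_hilbert_space ip ->
  (exists f : G -> nat, injective f) ->
  proj_unitary_rep ip pi -> proj_unitary_rep ip sigma ->
  commutant_pair ip pi sigma ->
  bessel_dense ip pi ->
  (forall i, bessel_vec ip pi (xi i)) ->
  (forall i, bessel_vec ip pi (eta i)) ->
  (forall y, l2k_closed_span (Theta_range ip pi xi) y <->
             l2k_closed_span (Theta_range ip pi eta) y) ->
  (forall v, Hk_closed_span ip (orbitk sigma xi) v <->
             Hk_closed_span ip (orbitk sigma eta) v).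
Proof.
move=> hH _ [piU [mu [hmu1 hmu]]] [sigU [mus [hmus1 hmus]]] hcp hdense hxi heta hTh v.
split.
- exact: (dir hH piU hmu1 hmu sigU hmus1 hmus hcp hdense heta hxi (fun y => iff_sym (hTh y))).
- exact: (dir hH piU hmu1 hmu sigU hmus1 hmus hcp hdense hxi heta hTh).
Qed.
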